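(* Let $f\in C^1[0,1]$ with $f(0)=0$, $h:=f'$, and $q$ satisfying (q). Assume that $\lim_{\varphi\to0^+}q(\varphi)/\varphi$ exists in $[0,\infty)$, that $\int_0^{\delta} q(\sigma)/\sigma^2\,d\sigma<+\infty$ for some $\delta\in(0,1)$, and that $c^*>h(0)$. Then problem $(P_{c^*})$ admits a unique solution $z$, and it satisfies $z(1)=0$ (i.e., $z=z^*$).
   Context: Condition (q): $q\in C[0,1]$, $q>0$ on $(0,1)$, $q(0)=q(1)=0$, and $\limsup_{\varphi\to0^+}q(\varphi)/\varphi<+\infty$. For $c\in\mathbb R$, a solution of problem $(P_c)$ is a function $z\in C[0,1]\cap C^1(0,1)$ with $\dot z(\varphi)=h(\varphi)-c-q(\varphi)/z(\varphi)$ and $z(\varphi)<0$ for all $\varphi\in(0,1)$, and $z(0)=0$. A solution of $(P^{00}_c)$ is a solution of $(P_c)$ which also satisfies $z(1)=0$. $c^*$ denotes the real number such that $(P^{00}_c)$ has a solution iff $c\ge c^*$ (that solution, denoted $z^*$ when $c=c^*$, being unique). *)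

(* Defs.v *)
From Stdlib Require Import Reals.
From Coquelicot Require Import Coquelicot.
Open Scope R_scope.

Definition in01 (x : R) : Prop := 0 <= x <= 1.
Definition in01o (x : R) : Prop := 0 < x < 1.

Definition cont01 (g : R -> R) : Prop :=
  forall x, in01 x -> filterlim g (within in01 (locally x)) (locally (g x)).

Definition C1_01_with_deriv (f h : R -> R) : Prop :=
  cont01 f /\ cont01 h /\
  forall x, in01 x ->
    filterlim (fun y => (f y - f x) / (y - x))
      (within (fun y => in01 y /\ y <> x) (locally x)) (locally (h x)).

(* Condition (q). limsup_{φ→0+} q(φ)/φ < +∞ is unfolded as:
   q(φ)/φ is bounded above on some right neighbourhood of 0. *)
Definition cond_q (q : R -> R) : Prop :=
  cont01 q /\ (forall x, in01o x -> 0 < q x) /\ q 0 = 0 /\ q 1 = 0 /\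
  exists M eps, 0 < eps /\ forall x, 0 < x < eps -> q x / x <= M.

Definition sol_P (h q : R -> R) (c : R) (z : R -> R) : Prop :=
  cont01 z /\
  (forall x, in01o x -> is_derive z x (h x - c - q x / z x)) /\
  (forall x, in01o x -> z x < 0) /\
  z 0 = 0.

Definition sol_P00 (h q : R -> R) (c : R) (z : R -> R) : Prop :=
  sol_P h q c z /\ z 1 = 0.

(* Main.v *)
Require Import Defs.
From Stdlib Require Import Reals Lra Lia Psatz Classical ClassicalEpsilon.
From Coquelicot Require Import Coquelicot.
Open Scope R_scope.

Lemma cont_pt_of_derive (f : R -> R) t l : is_derive f t l -> continuity_pt f t.
Proof.
  intros H. apply continuity_pt_filterlim.
  apply (ex_derive_continuous f t). exists l; exact H.
Qed.

Lemma incr_of_deriv (f df : R -> R) a b : a <= b ->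
  (forall t, a <= t <= b -> is_derive f t (df t)) ->
  (forall t, a <= t <= b -> 0 <= df t) -> f a <= f b.
Proof.
  intros Hab Hd Hp.
  destruct (MVT_gen f a b df) as [c [Hc Heq]].
  - intros x Hx. rewrite Rmin_left in Hx by lra. rewrite Rmax_right in Hx by lra.
    apply Hd; lra.
  - intros x Hx. rewrite Rmin_left in Hx by lra. rewrite Rmax_right in Hx by lra.
    apply cont_pt_of_derive with (df x). apply Hd; lra.
  - rewrite Rmin_left in Hc by lra. rewrite Rmax_right in Hc by lra.
    assert (0 <= df c * (b - a)) by (apply Rmult_le_pos; [apply Hp; lra| lra]).
    lra.
Qed.

Lemma is_derive_mult_R (f g : R -> R) x df dg :
  is_derive f x df -> is_derive g x dg ->
  is_derive (fun t => f t * g t) x (df * g x + f x * dg).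
Proof.
  intros H1 H2. apply (is_derive_mult f g x df dg H1 H2). intros; apply Rmult_comm.
Qed.

Lemma is_derive_exp_comp (f : R -> R) x df :
  is_derive f x df -> is_derive (fun t => exp (f t)) x (df * exp (f x)).
Proof.
  intros H. apply (is_derive_comp exp f x (exp (f x)) df); [apply is_derive_exp| exact H].
Qed.

Lemma first_crossing (D : R -> R) a b : a < b ->
  (forall t, a <= t <= b -> continuous D t) -> D a > 0 -> D b <= 0 ->
  exists T, a < T <= b /\ D T = 0 /\ forall t, a <= t < T -> D t > 0.
Proof.
  intros Hab Hc Ha Hb.
  set (E := fun T => a <= T <= b /\ forall t, a <= t <= T -> D t > 0).
  assert (Hbd : bound E) by (exists b; intros x [Hx _]; lra).
  assert (Hex : exists x, E x) by (exists a; split; [lra| intros t Ht; replace t with a by lra; lra]).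
  destruct (completeness E Hbd Hex) as [T [HT1 HT2]].
  assert (HaT : a <= T) by (apply HT1; destruct Hex; unfold E; split; [lra| intros t Ht; replace t with a by lra; lra]).
  assert (HTb : T <= b) by (apply HT2; intros x [Hx _]; lra).
  assert (Hlt : forall t, a <= t < T -> D t > 0).
  { intros t Ht. destruct (Rle_or_lt t a) as [Hta|Hta].
    - replace t with a by lra; lra.
    - apply NNPP; intro Hn.
      assert (HT' : T <= t). { apply HT2. intros x [Hx1 Hx2]. apply Rnot_lt_le. intro Hxt.
        apply Hn. apply Hx2. lra. }
      lra. }
  destruct (Rle_or_lt (D T) 0) as [HDT|HDT].
  -
    assert (HaT' : a < T). { destruct HaT as [HaT|HaT]; [lra|]. subst T. lra. }
    assert (D T >= 0).
    { apply Rnot_lt_ge. intro Hneg.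
      assert (Hct := Hc T (conj HaT HTb)).
      assert (Hl := proj1 (filterlim_locally _ _) Hct (mkposreal (- D T) ltac:(lra))).
      destruct Hl as [[d Hd] Hd'].
      set (t := Rmax a (T - d/2)).
      assert (Ht1 : a <= t < T) by (unfold t; split; [apply Rmax_l| apply Rmax_lub_lt; lra]).
      assert (Hball : ball T d t).
      { unfold ball; simpl; unfold AbsRing_ball, minus, plus, opp, abs; simpl.
        unfold t. rewrite Rabs_left1. 2:{ apply Rle_minus, Rmax_lub; lra. }
        apply Rmax_case_strong; intros; lra. }
      specialize (Hd' t Hball). unfold ball in Hd'; simpl in Hd'.
      unfold AbsRing_ball, minus, plus, opp, abs in Hd'; simpl in Hd'.
      apply Rabs_def2 in Hd'. specialize (Hlt t Ht1). lra. }
    exists T. split; [lra|]. split; [lra|]. exact Hlt.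
  -
    exfalso.
    assert (HTb' : T < b). { destruct HTb as [HTb|HTb]; [lra|]. subst T. lra. }
    assert (Hct := Hc T (conj HaT HTb)).
    assert (Hl := proj1 (filterlim_locally _ _) Hct (mkposreal (D T) HDT)).
    destruct Hl as [[d Hd] Hd'].
    set (T' := Rmin b (T + d/2)).
    assert (HT'1 : T < T') by (unfold T'; apply Rmin_glb_lt; lra).
    assert (E T').
    { split. { unfold T'. split; [apply Rle_trans with T; [lra| apply Rlt_le; exact HT'1] | apply Rmin_l]. }
      intros t Ht. destruct (Rlt_or_le t T) as [HtT|HtT]. apply Hlt; lra.
      assert (Hball : ball T d t).
      { unfold ball; simpl; unfold AbsRing_ball, minus, plus, opp, abs; simpl.
        rewrite Rabs_right by lra. assert (T' <= T + d/2) by (unfold T'; apply Rmin_r). lra. }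
      specialize (Hd' t Hball). unfold ball in Hd'; simpl in Hd'.
      unfold AbsRing_ball, minus, plus, opp, abs in Hd'; simpl in Hd'.
      apply Rabs_def2 in Hd'. lra. }
    specialize (HT1 T' H). lra.
Qed.

Lemma locally_interval al be t : al < t < be -> locally t (fun u => al < u < be).
Proof.
  intros Ht. exists (mkposreal (Rmin (t - al) (be - t)) ltac:(apply Rmin_glb_lt; lra)).
  intros u Hu. unfold ball in Hu; simpl in Hu; unfold AbsRing_ball, minus, plus, opp, abs in Hu; simpl in Hu.
  apply Rabs_def2 in Hu. assert (Rmin (t - al) (be - t) <= t - al) by apply Rmin_l.
  assert (Rmin (t - al) (be - t) <= be - t) by apply Rmin_r. lra.
Qed.

Lemma ex_RInt_open (g : R -> R) al be a u : al < a < be -> al < u < be ->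
  (forall t, al < t < be -> continuous g t) -> ex_RInt g a u.
Proof.
  intros Ha Hu Hc. apply (@ex_RInt_continuous R_CompleteNormedModule). intros z Hz. apply Hc.
  split.
  - apply Rlt_le_trans with (Rmin a u); [apply Rmin_glb_lt; lra| lra].
  - apply Rle_lt_trans with (Rmax a u); [lra| apply Rmax_lub_lt; lra].
Qed.

Lemma derive_RInt_open (g : R -> R) al be a t : al < a < be -> al < t < be ->
  (forall t, al < t < be -> continuous g t) -> is_derive (fun u => RInt g a u) t (g t).
Proof.
  intros Ha Ht Hc. apply (is_derive_RInt g (fun u => RInt g a u) a t).
  - generalize (locally_interval al be t Ht). apply filter_imp. intros u Hu.
    apply (@RInt_correct R_CompleteNormedModule). apply (ex_RInt_open g al be); auto.
  - apply Hc; auto.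
Qed.

Lemma E_lemma (D g r : R -> R) al be a b : al < a -> a <= b -> b < be ->
  (forall t, al < t < be -> continuous g t /\ is_derive D t (g t * D t + r t)) ->
  (forall t, a <= t <= b -> 0 <= r t) ->
  forall t1 t2, a <= t1 -> t1 <= t2 -> t2 <= b ->
  D t1 * exp (- RInt g a t1) <= D t2 * exp (- RInt g a t2).
Proof.
  intros Hal Hab Hbe Hd Hr t1 t2 H1 H12 H2.
  apply (incr_of_deriv (fun t => D t * exp (- RInt g a t)) (fun t => r t * exp (- RInt g a t))).
  - lra.
  - intros t Ht. destruct (Hd t ltac:(lra)) as [Hgc HD].
    assert (HG := derive_RInt_open g al be a t ltac:(lra) ltac:(lra) (fun u Hu => proj1 (Hd u Hu))).
    assert (HG' : is_derive (fun u => - RInt g a u) t (- g t)).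
    { apply (is_derive_opp (fun u => RInt g a u) t (g t) HG). }
    assert (He := is_derive_exp_comp _ _ _ HG').
    assert (Hm := is_derive_mult_R _ _ _ _ _ HD He).
    replace (r t * exp (- RInt g a t)) with
      ((g t * D t + r t) * exp (- RInt g a t) + D t * (- g t * exp (- RInt g a t))) by ring.
    exact Hm.
  - intros t Ht. apply Rmult_le_pos; [apply Hr; lra| apply Rlt_le, exp_pos].
Qed.

Lemma E_lemma_neg (D g r : R -> R) al be a b : al < a -> a <= b -> b < be ->
  (forall t, al < t < be -> continuous g t /\ is_derive D t (g t * D t + r t)) ->
  (forall t, a <= t <= b -> r t <= 0) ->
  forall t1 t2, a <= t1 -> t1 <= t2 -> t2 <= b ->
  D t2 * exp (- RInt g a t2) <= D t1 * exp (- RInt g a t1).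
Proof.
  intros Hal Hab Hbe Hd Hr t1 t2 H1 H12 H2.
  assert (H := E_lemma (fun t => - D t) g (fun t => - r t) al be a b Hal Hab Hbe).
  assert (H' : forall t1 t2, a <= t1 -> t1 <= t2 -> t2 <= b ->
     - D t1 * exp (- RInt g a t1) <= - D t2 * exp (- RInt g a t2)).
  { apply H.
    - intros t Ht. destruct (Hd t Ht) as [Hg HD]. split; auto.
      replace (g t * - D t + - r t) with (- (g t * D t + r t)) by ring.
      apply (is_derive_opp D t _ HD).
    - intros t Ht. specialize (Hr t Ht). lra. }
  specialize (H' t1 t2 H1 H12 H2). lra.
Qed.

Lemma E_lemma_eq (D g : R -> R) al be a b : al < a -> a <= b -> b < be ->
  (forall t, al < t < be -> continuous g t /\ is_derive D t (g t * D t)) ->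
  forall t, a <= t <= b -> D t = D a * exp (RInt g a t).
Proof.
  intros Hal Hab Hbe Hd t Ht.
  assert (Hd' : forall t, al < t < be -> continuous g t /\ is_derive D t (g t * D t + (fun _ => 0) t)).
  { intros u Hu. destruct (Hd u Hu) as [H1 H2]. split; auto. rewrite Rplus_0_r. exact H2. }
  assert (H1 := E_lemma D g (fun _ => 0) al be a b Hal Hab Hbe Hd' ltac:(intros; lra) a t ltac:(lra) ltac:(lra) ltac:(lra)).
  assert (H2 := E_lemma_neg D g (fun _ => 0) al be a b Hal Hab Hbe Hd' ltac:(intros; lra) a t ltac:(lra) ltac:(lra) ltac:(lra)).
  replace (RInt g a a) with 0 in H1, H2 by (rewrite RInt_point; reflexivity).
  rewrite Ropp_0, exp_0, Rmult_1_r in H1, H2.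
  assert (Heq : D t * exp (- RInt g a t) = D a) by lra.
  rewrite <- Heq. rewrite Rmult_assoc, <- exp_plus. replace (- RInt g a t + RInt g a t) with 0 by ring.
  rewrite exp_0; ring.
Qed.

Lemma key_ineq d e L eps : 0 <= L -> 0 <= eps -> Rabs e <= L * Rabs d + eps ->
  2 * d * e <= (2 * L + 1) * (d ^ 2 + eps ^ 2).
Proof.
  intros HL He H.
  assert (2 * d * e <= 2 * Rabs d * Rabs e).
  { rewrite Rmult_assoc. rewrite Rmult_assoc. apply Rmult_le_compat_l; [lra|].
    rewrite <- Rabs_mult. apply Rle_abs. }
  assert (Rabs d * Rabs e <= Rabs d * (L * Rabs d + eps)) by (apply Rmult_le_compat_l; [apply Rabs_pos| exact H]).
  assert (Rabs d * Rabs d = d * d) by (rewrite <- Rabs_mult; apply Rabs_right; nra).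
  assert (0 <= (Rabs d - eps)^2) by apply pow2_ge_0.
  assert (0 <= L * eps ^2) by nra.
  nra.
Qed.

Lemma deriv_diff_sq (y1 y2 f1 f2 : R -> R) t k s :
  is_derive y1 t (f1 t) -> is_derive y2 t (f2 t) ->
  is_derive (fun u => ((y1 u - y2 u) ^ 2 + s) * exp (k * u)) t
   ((2 * (y1 t - y2 t) * (f1 t - f2 t)) * exp (k * t) + ((y1 t - y2 t)^2 + s) * (k * exp (k * t))).
Proof.
  intros H1 H2.
  assert (Hd : is_derive (fun u => y1 u - y2 u) t (f1 t - f2 t)) by (apply (is_derive_minus y1 y2 t _ _ H1 H2)).
  assert (Hsq : is_derive (fun u => (y1 u - y2 u) ^ 2 + s) t (2 * (y1 t - y2 t) * (f1 t - f2 t))).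
  { assert (Hm := is_derive_mult_R _ _ _ _ _ Hd Hd).
    assert (Hc : is_derive (fun _ : R => s) t 0) by (apply (@is_derive_const R_AbsRing R_NormedModule)).
    assert (Hp := is_derive_plus _ _ t _ _ Hm Hc). simpl in Hp.
    eapply is_derive_ext; [| replace (2 * (y1 t - y2 t) * (f1 t - f2 t)) with
      (plus ((f1 t - f2 t) * (y1 t - y2 t) + (y1 t - y2 t) * (f1 t - f2 t)) 0) by (unfold plus; simpl; ring); exact Hp].
    intros u; simpl. unfold plus; simpl. ring. }
  assert (Hk : is_derive (fun u => k * u) t k).
  { assert (H := is_derive_scal (fun u => u) t k 1 (@is_derive_id R_AbsRing t)).
    rewrite Rmult_1_r in H. exact H. }
  assert (He := is_derive_exp_comp _ _ _ Hk).
  assert (Hm := is_derive_mult_R _ _ _ _ _ Hsq He). simpl in Hm.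
  exact Hm.
Qed.

Lemma gronwall_fwd (y1 y2 f1 f2 : R -> R) L eps a b :
  a <= b -> 0 <= L -> 0 <= eps ->
  (forall t, a <= t <= b -> is_derive y1 t (f1 t) /\ is_derive y2 t (f2 t)) ->
  (forall t, a <= t <= b -> Rabs (f1 t - f2 t) <= L * Rabs (y1 t - y2 t) + eps) ->
  forall t, a <= t <= b ->
  (y1 t - y2 t) ^ 2 <= ((y1 a - y2 a) ^ 2 + eps ^ 2) * exp ((2 * L + 1) * (t - a)).
Proof.
  intros Hab HL He Hd Hb t Ht.
  set (k := - (2 * L + 1)).
  assert (Hdec : ((y1 t - y2 t) ^ 2 + eps^2) * exp (k * t) <= ((y1 a - y2 a) ^ 2 + eps^2) * exp (k * a)).
  { assert (H := incr_of_deriv (fun u => - (((y1 u - y2 u) ^ 2 + eps^2) * exp (k * u)))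
      (fun u => - ((2 * (y1 u - y2 u) * (f1 u - f2 u)) * exp (k * u) + ((y1 u - y2 u)^2 + eps^2) * (k * exp (k * u))))
      a t ltac:(lra)).
    assert (a <= t) by lra.
    cut (- (((y1 a - y2 a) ^ 2 + eps ^ 2) * exp (k * a)) <= - (((y1 t - y2 t) ^ 2 + eps ^ 2) * exp (k * t))); [lra|].
    apply H.
    - intros u Hu. destruct (Hd u ltac:(lra)) as [H1 H2].
      apply (is_derive_opp _ u _ (deriv_diff_sq y1 y2 f1 f2 u k (eps^2) H1 H2)).
    - intros u Hu. assert (Hk := key_ineq (y1 u - y2 u) (f1 u - f2 u) L eps HL He (Hb u ltac:(lra))).
      assert (0 < exp (k * u)) by apply exp_pos.
      assert (HH : 0 <= ((2*L+1)*((y1 u - y2 u)^2+eps^2) - 2*(y1 u - y2 u)*(f1 u - f2 u)) * exp (k*u))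
        by (apply Rmult_le_pos; lra).
      apply Rle_trans with (1 := HH). right. unfold k; ring. }
  assert (Hx : ((y1 t - y2 t) ^ 2 + eps^2) <= ((y1 a - y2 a) ^ 2 + eps^2) * exp ((2 * L + 1) * (t - a))).
  { replace (exp ((2 * L + 1) * (t - a))) with (exp (k * a) * exp (- (k * t))).
    2:{ rewrite <- exp_plus. f_equal. unfold k; ring. }
    assert (0 < exp (- (k*t))) by apply exp_pos.
    apply Rmult_le_reg_r with (exp (k * t)); [apply exp_pos|].
    rewrite !Rmult_assoc. rewrite <- (exp_plus (- (k * t))). replace (- (k * t) + k * t) with 0 by ring.
    rewrite exp_0, Rmult_1_r. exact Hdec. }
  assert (0 <= eps^2) by apply pow2_ge_0. lra.
Qed.

Lemma gronwall_bwd (y1 y2 f1 f2 : R -> R) L eps a b :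
  a <= b -> 0 <= L -> 0 <= eps ->
  (forall t, a <= t <= b -> is_derive y1 t (f1 t) /\ is_derive y2 t (f2 t)) ->
  (forall t, a <= t <= b -> Rabs (f1 t - f2 t) <= L * Rabs (y1 t - y2 t) + eps) ->
  forall t, a <= t <= b ->
  (y1 t - y2 t) ^ 2 <= ((y1 b - y2 b) ^ 2 + eps ^ 2) * exp ((2 * L + 1) * (b - t)).
Proof.
  intros Hab HL He Hd Hb t Ht.
  set (k := (2 * L + 1)).
  assert (Hinc : ((y1 t - y2 t) ^ 2 + eps^2) * exp (k * t) <= ((y1 b - y2 b) ^ 2 + eps^2) * exp (k * b)).
  { apply (incr_of_deriv (fun u => (((y1 u - y2 u) ^ 2 + eps^2) * exp (k * u)))
      (fun u => ((2 * (y1 u - y2 u) * (f1 u - f2 u)) * exp (k * u) + ((y1 u - y2 u)^2 + eps^2) * (k * exp (k * u))))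
      t b ltac:(lra)).
    - intros u Hu. destruct (Hd u ltac:(lra)) as [H1 H2].
      apply (deriv_diff_sq y1 y2 f1 f2 u k (eps^2) H1 H2).
    - intros u Hu.
      assert (Hk := key_ineq (y1 u - y2 u) (- (f1 u - f2 u)) L eps HL He).
      rewrite !Rabs_Ropp in Hk. specialize (Hk (Hb u ltac:(lra))).
      replace (2 * (y1 u - y2 u) * - (f1 u - f2 u)) with (- (2 * (y1 u - y2 u) * (f1 u - f2 u))) in Hk by ring.
      assert (0 < exp (k * u)) by apply exp_pos.
      assert (HH : 0 <= ((2*L+1)*((y1 u - y2 u)^2+eps^2) + 2*(y1 u - y2 u)*(f1 u - f2 u)) * exp (k*u))
        by (apply Rmult_le_pos; lra).
      apply Rle_trans with (1 := HH). right. unfold k; ring. }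
  assert (Hx : ((y1 t - y2 t) ^ 2 + eps^2) <= ((y1 b - y2 b) ^ 2 + eps^2) * exp ((2 * L + 1) * (b - t))).
  { replace (exp ((2 * L + 1) * (b - t))) with (exp (k * b) * exp (- (k * t))).
    2:{ rewrite <- exp_plus. f_equal. unfold k; ring. }
    apply Rmult_le_reg_r with (exp (k * t)); [apply exp_pos|].
    rewrite !Rmult_assoc. rewrite <- (exp_plus (- (k * t))). replace (- (k * t) + k * t) with 0 by ring.
    rewrite exp_0, Rmult_1_r. exact Hinc. }
  assert (0 <= eps^2) by apply pow2_ge_0. unfold k. lra.
Qed.

Lemma lip_continuous (f : R -> R) K t : 0 < K -> (forall x y, Rabs (f x - f y) <= K * Rabs (x - y)) ->
  continuous f t.
Proof.
  intros HK Hl. apply filterlim_locally. intros eps.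
  exists (mkposreal (eps / K) ltac:(apply Rdiv_lt_0_compat; [apply cond_pos| lra])).
  intros y Hy. unfold ball in *; simpl in *; unfold AbsRing_ball, minus, plus, opp, abs in *; simpl in *.
  apply Rle_lt_trans with (K * Rabs (y + - t)). apply Hl.
  apply Rmult_lt_compat_l with (r := K) in Hy; [|lra].
  replace (K * (eps / K)) with (pos eps) in Hy by (field; lra). lra.
Qed.

Definition cl (t : R) := Rmax (-1) (Rmin 2 t).

Lemma cl_lip x y : Rabs (cl x - cl y) <= Rabs (x - y).
Proof.
  unfold cl. unfold Rmax, Rmin.
  repeat (destruct Rle_dec); repeat (destruct Rle_dec); unfold Rabs; repeat destruct Rcase_abs; lra.
Qed.

Lemma cl_range t : -1 <= cl t <= 2.
Proof. unfold cl, Rmax, Rmin. repeat destruct Rle_dec; lra. Qed.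

Lemma cl_id t : -1 <= t <= 2 -> cl t = t.
Proof. intros H. unfold cl, Rmax, Rmin. repeat destruct Rle_dec; lra. Qed.

Lemma cl_cont t : continuous cl t.
Proof. apply (lip_continuous cl 1). lra. intros; rewrite Rmult_1_l; apply cl_lip. Qed.

Lemma RInt_bound_const (f : R -> R) a b M : ex_RInt f a b ->
  (forall u, Rmin a b <= u <= Rmax a b -> Rabs (f u) <= M) -> Rabs (RInt f a b) <= M * Rabs (b - a).
Proof.
  intros Hex Hb. destruct (Rle_or_lt a b) as [Hab|Hab].
  - rewrite Rmin_left, Rmax_right in Hb by lra. rewrite (Rabs_right (b - a)) by lra.
    rewrite Rmult_comm. apply abs_RInt_le_const; [lra| exact Hex| exact Hb].
  - rewrite Rmin_right, Rmax_left in Hb by lra.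
    rewrite <- (@opp_RInt_swap R_CompleteNormedModule f b a (ex_RInt_swap _ _ _ Hex)). change (opp (RInt f b a)) with (- RInt f b a).
    rewrite Rabs_Ropp. rewrite (Rabs_left (b - a)) by lra. replace (- (b - a)) with (a - b) by ring.
    rewrite Rmult_comm. apply abs_RInt_le_const; [lra| apply ex_RInt_swap; exact Hex| exact Hb].
Qed.

Lemma RInt_bound_deriv (f Psi psi : R -> R) a b : a <= b -> ex_RInt f a b ->
  (forall u, a <= u <= b -> is_derive Psi u (psi u) /\ continuous psi u) ->
  (forall u, a <= u <= b -> Rabs (f u) <= psi u) ->
  Rabs (RInt f a b) <= Psi b - Psi a.
Proof.
  intros Hab Hex Hd Hb.
  assert (Hip : is_RInt psi a b (Psi b - Psi a)).
  { apply (@is_RInt_derive R_CompleteNormedModule Psi psi a b).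
    - intros x Hx. rewrite Rmin_left, Rmax_right in Hx by lra. apply Hd; lra.
    - intros x Hx. rewrite Rmin_left, Rmax_right in Hx by lra. apply Hd; lra. }
  assert (Hexp : ex_RInt psi a b) by (eexists; exact Hip).
  assert (HR : RInt psi a b = Psi b - Psi a) by (apply is_RInt_unique; exact Hip).
  assert (H1 : 0 <= RInt (fun u => psi u - f u) a b).
  { apply RInt_ge_0; [exact Hab| apply (ex_RInt_minus psi f); [exact Hexp| exact Hex]|]. intros x Hx.
    specialize (Hb x ltac:(lra)). unfold Rabs in Hb; destruct Rcase_abs in Hb; lra. }
  assert (H2 : 0 <= RInt (fun u => psi u + f u) a b).
  { apply RInt_ge_0; [exact Hab| apply (ex_RInt_plus psi f); [exact Hexp| exact Hex]|]. intros x Hx.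
    specialize (Hb x ltac:(lra)). unfold Rabs in Hb; destruct Rcase_abs in Hb; lra. }
  assert (E1 : RInt (fun u => psi u - f u) a b = RInt psi a b - RInt f a b)
    by (apply (@RInt_minus R_CompleteNormedModule psi f a b Hexp Hex)).
  assert (E2 : RInt (fun u => psi u + f u) a b = RInt psi a b + RInt f a b)
    by (apply (@RInt_plus R_CompleteNormedModule psi f a b Hexp Hex)).
  rewrite E1, HR in H1. rewrite E2, HR in H2.
  apply Rabs_le. lra.
Qed.

Lemma is_derive_exp_lin (k c : R) u : is_derive (fun x => exp (k * x + c)) u (k * exp (k * u + c)).
Proof.
  assert (Hk : is_derive (fun x => k * x + c) u k).
  { auto_derive; auto. ring. }
  apply (is_derive_exp_comp _ _ _ Hk).
Qed.

Lemma cont_exp_lin A B k c u : continuous (fun x => A * (B * exp (k * x + c))) u.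
Proof. apply (ex_derive_continuous (fun x => A * (B * exp (k * x + c)))). auto_derive; auto. Qed.

Lemma RInt_exp_bound (f : R -> R) x0 b L m : 0 < L -> 0 <= m -> ex_RInt f x0 b ->
  (forall u, Rmin x0 b <= u <= Rmax x0 b -> Rabs (f u) <= L * m * exp (2 * L * Rabs (u - x0))) ->
  Rabs (RInt f x0 b) <= m / 2 * exp (2 * L * Rabs (b - x0)).
Proof.
  intros HL Hm Hex Hb. destruct (Rle_or_lt x0 b) as [Hab|Hab].
  - rewrite Rmin_left, Rmax_right in Hb by lra.
    assert (H := RInt_bound_deriv f (fun u => m / 2 * exp (2 * L * u + (- 2 * L * x0)))
      (fun u => m / 2 * ((2 * L) * exp (2 * L * u + (- 2 * L * x0)))) x0 b Hab Hex).
    rewrite (Rabs_right (b - x0)) by lra.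
    assert (Hfin : m / 2 * exp (2 * L * b + - 2 * L * x0) - m / 2 * exp (2 * L * x0 + - 2 * L * x0)
       <= m / 2 * exp (2 * L * (b - x0))).
    { replace (2 * L * b + - 2 * L * x0) with (2 * L * (b - x0)) by ring.
      assert (0 < exp (2 * L * x0 + - 2 * L * x0)) by apply exp_pos. nra. }
    apply Rle_trans with (2 := Hfin). apply H.
    + intros u Hu. split.
      * apply is_derive_scal. apply is_derive_exp_lin.
      * apply cont_exp_lin.
    + intros u Hu.
      replace (2 * L * u + - 2 * L * x0) with (2 * L * (u - x0)) by ring.
      specialize (Hb u Hu). rewrite (Rabs_right (u - x0)) in Hb by lra. lra.
  - rewrite Rmin_right, Rmax_left in Hb by lra.
    rewrite <- (@opp_RInt_swap R_CompleteNormedModule f b x0 (ex_RInt_swap _ _ _ Hex)). change (opp (RInt f b x0)) with (- RInt f b x0).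
    rewrite Rabs_Ropp.
    assert (H := RInt_bound_deriv f (fun u => - (m / 2) * exp ((- 2 * L) * u + (2 * L * x0)))
      (fun u => - (m / 2) * ((- 2 * L) * exp ((- 2 * L) * u + (2 * L * x0)))) b x0 ltac:(lra) (ex_RInt_swap _ _ _ Hex)).
    rewrite (Rabs_left (b - x0)) by lra.
    assert (Hfin : - (m / 2) * exp (- 2 * L * x0 + 2 * L * x0) - - (m / 2) * exp (- 2 * L * b + 2 * L * x0)
       <= m / 2 * exp (2 * L * - (b - x0))).
    { replace (- 2 * L * b + 2 * L * x0) with (2 * L * - (b - x0)) by ring.
      assert (0 < exp (- 2 * L * x0 + 2 * L * x0)) by apply exp_pos. nra. }
    apply Rle_trans with (2 := Hfin). apply H.
    + intros u Hu. split.
      * apply is_derive_scal. apply is_derive_exp_lin.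
      * apply cont_exp_lin.
    + intros u Hu. specialize (Hb u Hu). rewrite (Rabs_left1 (u - x0)) in Hb by lra.
      replace (- 2 * L * u + 2 * L * x0) with (2 * L * - (u - x0)) by ring. lra.
Qed.

Lemma cont_plus_R (f g : R -> R) t : continuous f t -> continuous g t -> continuous (fun x => f x + g x) t.
Proof. intros H1 H2. exact (continuous_plus f g t H1 H2). Qed.

Lemma RInt_cont_upper (f : R -> R) a : (forall t, continuous f t) -> forall b, continuous (fun b => RInt f a b) b.
Proof.
  intros Hf b. apply (ex_derive_continuous (fun b => RInt f a b)). exists (f b).
  apply (is_derive_RInt f (fun b => RInt f a b) a b).
  - apply filter_forall. intros u. apply (@RInt_correct R_CompleteNormedModule).
    apply (@ex_RInt_continuous R_CompleteNormedModule). intros; apply Hf.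
  - apply Hf.
Qed.

Lemma is_derive_const_plus (f : R -> R) t l s : is_derive f t l -> is_derive (fun u => s + f u) t l.
Proof.
  intros H. assert (Hc : is_derive (fun _ : R => s) t 0) by (apply (@is_derive_const R_AbsRing R_NormedModule)).
  assert (Hp := is_derive_plus _ _ t _ _ Hc H).
  eapply is_derive_ext; [| replace l with (plus 0 l) by (unfold plus; simpl; ring); exact Hp].
  intros; reflexivity.
Qed.

Lemma pow2_ge_INR n : INR n <= 2 ^ n.
Proof.
  induction n. simpl; lra. rewrite S_INR. simpl.
  assert (1 <= 2 ^ n) by (apply pow_R1_Rle; lra). lra.
Qed.

Lemma geom_small K eps : 0 < eps -> exists N, forall n, (N <= n)%nat -> K / 2 ^ n < eps.
Proof.
  intros He. destruct (INR_archimed eps (Rabs K) He) as [N HN].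
  exists N. intros n Hn.
  assert (INR N <= INR n) by (apply le_INR; lia).
  assert (H2 := pow2_ge_INR n). assert (0 < 2 ^ n) by (apply pow_lt; lra).
  apply Rmult_lt_reg_r with (2 ^ n); auto. unfold Rdiv. rewrite Rmult_assoc, Rinv_l by lra.
  assert (K <= Rabs K) by apply Rle_abs. nra.
Qed.

Lemma exp_ge1 x : 0 <= x -> 1 <= exp x.
Proof. intros H. destruct (Req_dec x 0). subst; rewrite exp_0; lra. left; rewrite <- exp_0; apply exp_increasing; lra. Qed.

Lemma splus_minus (s x : R) : s + x - s = x.
Proof. ring. Qed.

Lemma splus_minus2 (s a b : R) : s + a - (s + b) = a - b.
Proof. ring. Qed.

Section Picard.
Variables (G : R -> R -> R) (L B x0 s : R).
Hypothesis HL : 0 < L.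
Hypothesis HB : 0 <= B.
Hypothesis Hlip : forall t y1 y2, Rabs (G t y1 - G t y2) <= L * Rabs (y1 - y2).
Hypothesis Hbd : forall t y, Rabs (G t y) <= B.
Hypothesis Hcont : forall y : R -> R, (forall t, continuous y t) -> forall t, continuous (fun u => G u (y u)) t.
Hypothesis Hx0 : -1 <= x0 <= 2.

Fixpoint pic (n : nat) : R -> R :=
  match n with
  | O => fun _ => s
  | S m => fun t => s + RInt (fun u => G u (pic m u)) x0 (cl t)
  end.

Lemma pic_cont n t : continuous (pic n) t.
Proof.
  revert t; induction n; intros t.
  - apply continuous_const.
  - simpl. apply cont_plus_R. apply continuous_const.
    apply (continuous_comp cl (fun b => RInt (fun u => G u (pic n u)) x0 b)).
    apply cl_cont. apply RInt_cont_upper. apply Hcont. exact IHn.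
Qed.

Lemma pic_ex n b : ex_RInt (fun u => G u (pic n u)) x0 b.
Proof.
  apply (@ex_RInt_continuous R_CompleteNormedModule). intros; apply Hcont. apply pic_cont.
Qed.

Definition Cst := 3 * B.

Lemma pic_diff n t : Rabs (pic (S n) t - pic n t) <= Cst / 2 ^ n * exp (2 * L * Rabs (cl t - x0)).
Proof.
  revert t; induction n; intros t.
  - simpl pic. rewrite splus_minus.
    apply Rle_trans with (B * Rabs (cl t - x0)).
    + apply RInt_bound_const. apply (pic_ex 0). intros; apply Hbd.
    + assert (Rabs (cl t - x0) <= 3).
      { assert (H := cl_range t). unfold Rabs; destruct Rcase_abs; lra. }
      assert (1 <= exp (2 * L * Rabs (cl t - x0))).
      { apply exp_ge1. assert (0 <= Rabs (cl t - x0)) by apply Rabs_pos. nra. }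
      unfold Cst. simpl. nra.
  - change (pic (S (S n)) t) with (s + RInt (fun u => G u (pic (S n) u)) x0 (cl t)).
    change (pic (S n) t) with (s + RInt (fun u => G u (pic n u)) x0 (cl t)).
    assert (E : s + RInt (fun u => G u (pic (S n) u)) x0 (cl t) - (s + RInt (fun u => G u (pic n u)) x0 (cl t))
       = RInt (fun u => G u (pic (S n) u) - G u (pic n u)) x0 (cl t)).
    { assert (Em : RInt (fun u => G u (pic (S n) u) - G u (pic n u)) x0 (cl t) =
        RInt (fun u => G u (pic (S n) u)) x0 (cl t) - RInt (fun u => G u (pic n u)) x0 (cl t)).
      { apply (@RInt_minus R_CompleteNormedModule (fun u => G u (pic (S n) u)) (fun u => G u (pic n u)) x0 (cl t)
         (pic_ex (S n) (cl t)) (pic_ex n (cl t))). }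
      rewrite Em. apply splus_minus2. }
    rewrite E. clear E.
    assert (Hm : 0 <= Cst / 2 ^ n).
    { unfold Cst. apply Rmult_le_pos. lra. apply Rlt_le, Rinv_0_lt_compat, pow_lt; lra. }
    apply Rle_trans with (Cst / 2 ^ n / 2 * exp (2 * L * Rabs (cl t - x0))).
    + apply RInt_exp_bound; auto.
      * apply (ex_RInt_minus (fun u => G u (pic (S n) u)) (fun u => G u (pic n u))); apply pic_ex.
      * intros u Hu. apply Rle_trans with (L * Rabs (pic (S n) u - pic n u)). apply Hlip.
        rewrite Rmult_assoc. apply Rmult_le_compat_l. lra.
        assert (Hcu : cl u = u).
        { apply cl_id. assert (H := cl_range t).
          assert (Rmin x0 (cl t) >= -1) by (apply Rmin_case; lra).
          assert (Rmax x0 (cl t) <= 2) by (apply Rmax_case; lra). lra. }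
        assert (HI := IHn u). rewrite Hcu in HI. exact HI.
    + right. simpl. field. apply pow_nonzero; lra.
Qed.

Definition Wst := Cst * exp (6 * L).

Lemma Wst_pos : 0 <= Wst.
Proof. unfold Wst, Cst. apply Rmult_le_pos; [lra| apply Rlt_le, exp_pos]. Qed.

Lemma pic_step n t : Rabs (pic (S n) t - pic n t) <= Wst / 2 ^ n.
Proof.
  apply Rle_trans with (1 := pic_diff n t).
  unfold Wst. assert (Hp : 0 < 2 ^ n) by (apply pow_lt; lra).
  assert (Rabs (cl t - x0) <= 3).
  { assert (H := cl_range t). unfold Rabs; destruct Rcase_abs; lra. }
  assert (exp (2 * L * Rabs (cl t - x0)) <= exp (6 * L)).
  { destruct (Req_dec (2 * L * Rabs (cl t - x0)) (6 * L)) as [Heq|Hne]. rewrite Heq; lra.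
    left. apply exp_increasing. assert (0 <= Rabs (cl t - x0)) by apply Rabs_pos. nra. }
  unfold Rdiv. assert (0 <= Cst) by (unfold Cst; lra).
  assert (0 < / 2 ^ n) by (apply Rinv_0_lt_compat; lra).
  replace (Cst * exp (6 * L) * / 2 ^ n) with (Cst * / 2 ^ n * exp (6 * L)) by ring.
  apply Rmult_le_compat_l; [apply Rmult_le_pos; lra| lra].
Qed.

Lemma pic_cauchy p n t : Rabs (pic (n + p) t - pic n t) <= 2 * Wst / 2 ^ n - 2 * Wst / 2 ^ (n + p).
Proof.
  induction p.
  - rewrite Nat.add_0_r. unfold Rminus. rewrite Rplus_opp_r, Rabs_R0. lra.
  - replace (n + S p)%nat with (S (n + p)) by lia.
    replace (pic (S (n + p)) t - pic n t) with ((pic (S (n + p)) t - pic (n + p) t) + (pic (n + p) t - pic n t)) by ring.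
    apply Rle_trans with (1 := Rabs_triang _ _).
    assert (H := pic_step (n + p) t).
    replace (2 * Wst / 2 ^ S (n + p)) with (Wst / 2 ^ (n + p)) by (simpl; field; apply pow_nonzero; lra).
    lra.
Qed.

Lemma pic_cauchy' m n t : (n <= m)%nat -> Rabs (pic m t - pic n t) <= 2 * Wst / 2 ^ n.
Proof.
  intros H. replace m with (n + (m - n))%nat by lia.
  apply Rle_trans with (1 := pic_cauchy _ _ _).
  assert (0 <= 2 * Wst / 2 ^ (n + (m - n))).
  { apply Rmult_le_pos. assert (H1 := Wst_pos); lra. apply Rlt_le, Rinv_0_lt_compat, pow_lt; lra. }
  lra.
Qed.

Lemma pic_conv t : ex_finite_lim_seq (fun n => pic n t).
Proof.
  apply ex_lim_seq_cauchy_corr. intros eps.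
  destruct (geom_small (2 * Wst) eps (cond_pos eps)) as [N HN].
  exists N. intros n m Hn Hm.
  destruct (Compare_dec.le_lt_dec n m) as [Hnm|Hnm].
  - rewrite Rabs_minus_sym. apply Rle_lt_trans with (1 := pic_cauchy' m n t Hnm). apply HN; lia.
  - apply Rle_lt_trans with (1 := pic_cauchy' n m t ltac:(lia)). apply HN; lia.
Qed.

Definition Ylim t := real (Lim_seq (fun n => pic n t)).

Lemma Ylim_lim t : is_lim_seq (fun n => pic n t) (Ylim t).
Proof.
  destruct (pic_conv t) as [l Hl]. unfold Ylim. rewrite (is_lim_seq_unique _ _ Hl). exact Hl.
Qed.

Lemma Ylim_bound n t : Rabs (pic n t - Ylim t) <= 2 * Wst / 2 ^ n.
Proof.
  apply Rnot_lt_le. intro Hc.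
  set (d := Rabs (pic n t - Ylim t) - 2 * Wst / 2 ^ n).
  assert (Hd : 0 < d) by (unfold d; lra).
  assert (Hl := proj2 (is_lim_seq_spec _ _) (Ylim_lim t) (mkposreal d Hd)).
  destruct Hl as [N HN]. simpl in HN.
  specialize (HN (max N n) ltac:(lia)).
  assert (H := pic_cauchy' (max N n) n t ltac:(lia)).
  assert (Rabs (pic n t - Ylim t) <= Rabs (pic (max N n) t - pic n t) + Rabs (pic (max N n) t - Ylim t)).
  { replace (pic n t - Ylim t) with (- (pic (max N n) t - pic n t) + (pic (max N n) t - Ylim t)) by ring.
    apply Rle_trans with (1 := Rabs_triang _ _). rewrite Rabs_Ropp. lra. }
  unfold d in HN. lra.
Qed.


Lemma Y_int t : Ylim t = s + RInt (fun u => G u (Ylim u)) x0 (cl t) /\ ex_RInt (fun u => G u (Ylim u)) x0 (cl t).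
Proof.
  set (fN := fun n u => G u (pic n u)).
  set (g := fun u => G u (Ylim u)).
  destruct (@filterlim_RInt nat R_CompleteNormedModule fN x0 (cl t) eventually eventually_filter g
     (fun n => RInt (fN n) x0 (cl t))) as [If [Hh Hi]].
  - intros n. apply (@RInt_correct R_CompleteNormedModule). apply pic_ex.
  - intros P [eps HP].
    destruct (geom_small (L * (2 * Wst)) eps (cond_pos eps)) as [N HN].
    exists N. intros n Hn. apply HP. intros u.
    unfold ball; simpl. unfold AbsRing_ball, minus, plus, opp, abs; simpl.
    unfold fN, g. apply Rle_lt_trans with (L * Rabs (pic n u - Ylim u)).
    + rewrite <- Rabs_Ropp. replace (- (G u (pic n u) + - G u (Ylim u))) with (G u (Ylim u) - G u (pic n u)) by ring.
      rewrite Rabs_minus_sym. apply Hlip.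
    + apply Rle_lt_trans with (L * (2 * Wst / 2 ^ n)).
      apply Rmult_le_compat_l; [lra| apply Ylim_bound].
      replace (L * (2 * Wst / 2 ^ n)) with (L * (2 * Wst) / 2 ^ n) by (field; apply pow_nonzero; lra).
      apply HN; exact Hn.
  - assert (HY : Ylim t = s + If).
    { assert (H1 : is_lim_seq (fun n => pic (S n) t) (Ylim t)) by (apply (proj1 (is_lim_seq_incr_1 (fun n => pic n t) (Ylim t))); apply Ylim_lim).
      assert (H2 : is_lim_seq (fun n => pic (S n) t) (s + If)).
      { apply is_lim_seq_plus'. apply is_lim_seq_const. exact Hh. }
      assert (H := is_lim_seq_unique _ _ H1). rewrite (is_lim_seq_unique _ _ H2) in H.
      injection H; intros; auto. }
    split.
    + rewrite HY. f_equal. symmetry. apply is_RInt_unique. exact Hi.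
    + exists If. exact Hi.
Qed.

Lemma Ylim_lip t1 t2 : Rabs (Ylim t1 - Ylim t2) <= B * Rabs (t1 - t2).
Proof.
  destruct (Y_int t1) as [E1 X1]. destruct (Y_int t2) as [E2 X2].
  rewrite E1, E2. rewrite splus_minus2.
  assert (Hch : ex_RInt (fun u => G u (Ylim u)) (cl t2) (cl t1)).
  { apply ex_RInt_Chasles with x0. apply ex_RInt_swap; exact X2. exact X1. }
  assert (Ec := @RInt_Chasles R_CompleteNormedModule (fun u => G u (Ylim u)) x0 (cl t2) (cl t1) X2 Hch).
  change (plus ?a ?b) with (a + b) in Ec.
  assert (E : RInt (fun u => G u (Ylim u)) x0 (cl t1) - RInt (fun u => G u (Ylim u)) x0 (cl t2)
     = RInt (fun u => G u (Ylim u)) (cl t2) (cl t1)).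
  { rewrite <- Ec. ring. }
  rewrite E. apply Rle_trans with (B * Rabs (cl t1 - cl t2)).
  apply RInt_bound_const. exact Hch. intros; apply Hbd.
  apply Rmult_le_compat_l; [lra| apply cl_lip].
Qed.

Lemma Ylim_cont t : continuous Ylim t.
Proof.
  apply (lip_continuous Ylim (B + 1)). lra. intros x y.
  apply Rle_trans with (1 := Ylim_lip x y).
  assert (0 <= Rabs (x - y)) by apply Rabs_pos. nra.
Qed.

Lemma Ylim_deriv t : -1 < t < 2 -> is_derive Ylim t (G t (Ylim t)).
Proof.
  intros Ht.
  apply is_derive_ext_loc with (fun u => s + RInt (fun v => G v (Ylim v)) x0 u).
  - generalize (locally_interval (-1) 2 t Ht). apply filter_imp. intros u Hu.
    destruct (Y_int u) as [E _]. rewrite E. rewrite cl_id by lra. reflexivity.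
  - apply is_derive_const_plus.
    apply (is_derive_RInt (fun v => G v (Ylim v)) (fun u => RInt (fun v => G v (Ylim v)) x0 u) x0 t).
    + apply filter_forall. intros u. apply (@RInt_correct R_CompleteNormedModule).
      apply (@ex_RInt_continuous R_CompleteNormedModule). intros z _. apply Hcont. apply Ylim_cont.
    + apply Hcont. apply Ylim_cont.
Qed.

Lemma Ylim_x0 : Ylim x0 = s.
Proof.
  destruct (Y_int x0) as [E _]. rewrite E. rewrite cl_id by lra. rewrite RInt_point. apply Rplus_0_r.
Qed.

End Picard.

Lemma picard_exists (G : R -> R -> R) L B x0 s : 0 < L -> 0 <= B ->
  (forall t y1 y2, Rabs (G t y1 - G t y2) <= L * Rabs (y1 - y2)) ->
  (forall t y, Rabs (G t y) <= B) ->
  (forall y : R -> R, (forall t, continuous y t) -> forall t, continuous (fun u => G u (y u)) t) ->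
  -1 <= x0 <= 2 ->
  exists Y : R -> R, Y x0 = s /\ (forall t, continuous Y t) /\ (forall t, -1 < t < 2 -> is_derive Y t (G t (Y t))).
Proof.
  intros HL HB Hlip Hbd Hcont Hx0. exists (Ylim G x0 s).
  split; [apply (Ylim_x0 G L B); auto| split; intros; [apply (Ylim_cont G L B)| apply (Ylim_deriv G L B)]; auto].
Qed.

Definition clamp01 (x : R) := Rmax 0 (Rmin 1 x).

Lemma clamp01_lip x y : Rabs (clamp01 x - clamp01 y) <= Rabs (x - y).
Proof.
  unfold clamp01, Rmax, Rmin.
  repeat (destruct Rle_dec); unfold Rabs; repeat destruct Rcase_abs; lra.
Qed.

Lemma clamp01_in x : in01 (clamp01 x).
Proof. unfold in01, clamp01, Rmax, Rmin. repeat destruct Rle_dec; lra. Qed.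

Lemma clamp01_id x : in01 x -> clamp01 x = x.
Proof. unfold in01, clamp01, Rmax, Rmin. intros. repeat destruct Rle_dec; lra. Qed.

Lemma ball_R (x y e : R) : ball x e y <-> Rabs (y - x) < e.
Proof. unfold ball; simpl; unfold AbsRing_ball, minus, plus, opp, abs; simpl. tauto. Qed.

Lemma cont01_clamp (g : R -> R) : cont01 g -> forall t, continuous (fun x => g (clamp01 x)) t.
Proof.
  intros Hg t. apply filterlim_locally. intros eps.
  assert (Hx := Hg (clamp01 t) (clamp01_in t)).
  assert (H := proj1 (filterlim_locally _ _) Hx eps).
  destruct H as [d Hd].
  exists d. intros y Hy. apply Hd.
  - apply ball_R. apply ball_R in Hy. apply Rle_lt_trans with (2 := Hy). apply clamp01_lip.
  - apply clamp01_in.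
Qed.

Lemma cont01_ed (g : R -> R) x : cont01 g -> in01 x -> forall eps, 0 < eps ->
  exists d, 0 < d /\ forall y, in01 y -> Rabs (y - x) < d -> Rabs (g y - g x) < eps.
Proof.
  intros Hg Hx eps He.
  assert (H := proj1 (filterlim_locally _ _) (Hg x Hx) (mkposreal eps He)).
  destruct H as [d Hd]. exists d. split. apply cond_pos.
  intros y Hy Hyx. assert (H := Hd y). apply ball_R. apply H; [apply ball_R; exact Hyx| exact Hy]. Qed.

Lemma cont_bound (g : R -> R) : (forall t, continuous g t) -> exists M, 0 <= M /\ forall t, in01 t -> Rabs (g t) <= M.
Proof.
  intros Hg.
  destruct (continuity_ab_maj (fun t => Rabs (g t)) 0 1 ltac:(lra)) as [Mx [HM _]].
  { intros c _. apply continuity_pt_filterlim. apply continuous_Rabs_comp. apply Hg. }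
  exists (Rabs (g Mx)). split. apply Rabs_pos. intros t Ht. apply HM. exact Ht.
Qed.

Section Main.
Variables (h q : R -> R).
Hypothesis Hh : cont01 h.
Hypothesis Hq : cond_q q.

Definition he x := h (clamp01 x).
Definition qe x := q (clamp01 x).

Lemma he_cont t : continuous he t.
Proof. apply cont01_clamp; exact Hh. Qed.
Lemma qe_cont t : continuous qe t.
Proof. apply cont01_clamp; exact (proj1 Hq). Qed.

Lemma q_nonneg x : in01 x -> 0 <= q x.
Proof.
  intros [H0 H1]. destruct Hq as [_ [Hp [Hq0 [Hq1 _]]]].
  destruct H0 as [H0|H0]; [destruct H1 as [H1|H1]|].
  - left; apply Hp; split; lra.
  - subst; lra.
  - subst; lra.
Qed.

Lemma qe_nonneg x : 0 <= qe x.
Proof. apply q_nonneg, clamp01_in. Qed.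

Lemma he_bound : exists Hm, 0 <= Hm /\ forall t, Rabs (he t) <= Hm.
Proof.
  destruct (cont_bound he he_cont) as [M [HM1 HM2]]. exists M. split; auto.
  intros t. unfold he. rewrite <- (clamp01_id (clamp01 t)) by apply clamp01_in.
  apply (HM2 (clamp01 t) (clamp01_in t)).
Qed.

Lemma qe_bound : exists Qm, 0 <= Qm /\ forall t, qe t <= Qm.
Proof.
  destruct (cont_bound qe qe_cont) as [M [HM1 HM2]]. exists M. split; auto.
  intros t. unfold qe. rewrite <- (clamp01_id (clamp01 t)) by apply clamp01_in.
  assert (H := HM2 (clamp01 t) (clamp01_in t)). unfold qe in H.
  apply Rle_trans with (2 := H). apply Rle_abs.
Qed.

Definition Gt (c eta t y : R) := he t - c - qe t / Rmin y (- eta).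

Lemma Rmin_lip a y1 y2 : Rabs (Rmin y1 a - Rmin y2 a) <= Rabs (y1 - y2).
Proof. unfold Rmin. repeat destruct Rle_dec; unfold Rabs; repeat destruct Rcase_abs; lra. Qed.

Lemma Gt_lip c eta Qm : 0 < eta -> (forall t, qe t <= Qm) -> forall t y1 y2,
  Rabs (Gt c eta t y1 - Gt c eta t y2) <= (Qm / eta ^ 2 + 1) * Rabs (y1 - y2).
Proof.
  intros He HQ t y1 y2. unfold Gt.
  set (m1 := Rmin y1 (- eta)). set (m2 := Rmin y2 (- eta)).
  assert (Hm1 : m1 <= - eta) by apply Rmin_r. assert (Hm2 : m2 <= - eta) by apply Rmin_r.
  assert (Hl : Rabs (m1 - m2) <= Rabs (y1 - y2)) by apply Rmin_lip.
  assert (E : he t - c - qe t / m1 - (he t - c - qe t / m2) = qe t * (m1 - m2) / (m1 * m2)) by (field; lra).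
  rewrite E. unfold Rdiv. rewrite Rabs_mult, Rabs_mult.
  assert (Hq0 := qe_nonneg t). rewrite (Rabs_right (qe t)) by lra.
  assert (Hmm : eta ^ 2 <= m1 * m2) by nra.
  assert (Hp : 0 < m1 * m2) by nra.
  rewrite (Rabs_right (/ (m1 * m2))) by (apply Rle_ge, Rlt_le, Rinv_0_lt_compat; lra).
  assert (/ (m1 * m2) <= / eta ^ 2) by (apply Rinv_le_contravar; [nra| lra]).
  assert (0 < / eta ^ 2) by (apply Rinv_0_lt_compat; nra).
  assert (0 <= Rabs (m1 - m2)) by apply Rabs_pos.
  assert (qe t * Rabs (m1 - m2) * / (m1 * m2) <= Qm * Rabs (y1 - y2) * / eta ^ 2).
  { assert (A : qe t * Rabs (m1 - m2) <= Qm * Rabs (y1 - y2)) by (apply Rmult_le_compat; try lra; apply HQ).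
    apply Rmult_le_compat; [apply Rmult_le_pos; lra | left; apply Rinv_0_lt_compat; lra | exact A | exact H]. }
  assert (0 <= Rabs (y1 - y2)) by apply Rabs_pos.
  unfold Rdiv. nra.
Qed.

Lemma Gt_bd c eta Hm Qm : 0 < eta -> (forall t, Rabs (he t) <= Hm) -> (forall t, qe t <= Qm) ->
  forall t y, Rabs (Gt c eta t y) <= Hm + Rabs c + Qm / eta.
Proof.
  intros He HH HQ t y. unfold Gt.
  set (m := Rmin y (- eta)). assert (Hm1 : m <= - eta) by apply Rmin_r.
  assert (Hq0 := qe_nonneg t).
  assert (Rabs (qe t / m) <= Qm / eta).
  { unfold Rdiv. rewrite Rabs_mult. rewrite (Rabs_right (qe t)) by lra. rewrite Rabs_Rinv by lra.
    rewrite Rabs_left by lra.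
    apply Rmult_le_compat; [lra| apply Rlt_le, Rinv_0_lt_compat; lra| apply HQ| apply Rinv_le_contravar; lra]. }
  apply Rle_trans with (Rabs (he t) + Rabs c + Rabs (qe t / m)).
  { unfold Rminus. apply Rle_trans with (1 := Rabs_triang _ _). rewrite Rabs_Ropp.
    apply Rplus_le_compat_r. apply Rle_trans with (1 := Rabs_triang _ _). rewrite Rabs_Ropp. lra. }
  specialize (HH t). lra.
Qed.

Lemma Gt_cont c eta : 0 < eta -> forall y : R -> R, (forall t, continuous y t) ->
  forall t, continuous (fun u => Gt c eta u (y u)) t.
Proof.
  intros He y Hy t. unfold Gt.
  assert (Hmc : continuous (fun u => Rmin (y u) (- eta)) t).
  { apply (continuous_comp y (fun z => Rmin z (- eta))). apply Hy.
    apply (lip_continuous (fun z => Rmin z (- eta)) 1). lra. intros; rewrite Rmult_1_l; apply Rmin_lip. }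
  assert (Hmn : Rmin (y t) (- eta) <> 0) by (assert (Rmin (y t) (- eta) <= - eta) by apply Rmin_r; lra).
  assert (Hinv := continuous_Rinv_comp _ _ Hmc Hmn).
  assert (Hd : continuous (fun u => qe u * / Rmin (y u) (- eta)) t).
  { exact (continuous_mult qe _ t (qe_cont t) Hinv). }
  apply (continuous_minus (fun u => he u - c) (fun u => qe u * / Rmin (y u) (- eta)) t); auto.
  apply (continuous_minus he (fun _ => c) t). apply he_cont. apply continuous_const.
Qed.

Definition solP (c eta x0 s : R) (Y : R -> R) :=
  Y x0 = s /\ (forall t, continuous Y t) /\ (forall t, -1 < t < 2 -> is_derive Y t (Gt c eta t (Y t))).

Definition sol (c eta x0 s : R) : R -> R :=
  epsilon (inhabits (fun _ : R => 0)) (solP c eta x0 s).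

Lemma sol_spec c eta x0 s : 0 < eta -> -1 <= x0 <= 2 -> solP c eta x0 s (sol c eta x0 s).
Proof.
  intros He Hx. unfold sol. apply epsilon_spec.
  destruct he_bound as [Hm [HHm HH]]. destruct qe_bound as [Qm [HQm HQ]].
  apply (picard_exists (Gt c eta) (Qm / eta ^ 2 + 1) (Hm + Rabs c + Qm / eta) x0 s).
  - assert (0 <= Qm / eta ^ 2) by (apply Rmult_le_pos; [lra| apply Rlt_le, Rinv_0_lt_compat; nra]). lra.
  - assert (0 <= Qm / eta) by (apply Rmult_le_pos; [lra| apply Rlt_le, Rinv_0_lt_compat; lra]).
    assert (0 <= Rabs c) by apply Rabs_pos. lra.
  - apply Gt_lip; auto.
  - apply Gt_bd; auto.
  - apply Gt_cont; auto.
  - exact Hx.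
Qed.

End Main.

Section Main2.
Variables (h q : R -> R).
Hypothesis Hh : cont01 h.
Hypothesis Hq : cond_q q.

Definition Ft (c t y : R) := h t - c - q t / y.

Lemma cont_int (g : R -> R) t : cont01 g -> 0 < t < 1 -> continuous g t.
Proof.
  intros Hg Ht. apply (continuous_ext_loc g (fun x => g (clamp01 x)) t).
  - generalize (locally_interval 0 1 t Ht). apply filter_imp. intros u Hu.
    rewrite clamp01_id; [reflexivity| unfold in01; lra].
  - apply cont01_clamp; auto.
Qed.

Lemma Gt_true c eta t y : 0 < t < 1 -> y <= - eta -> Gt h q c eta t y = Ft c t y.
Proof.
  intros Ht Hy. unfold Gt, Ft, he, qe. rewrite clamp01_id by (unfold in01; lra).
  rewrite Rmin_left by lra. reflexivity.
Qed.

Lemma Gt_eta c eta eta1 t y : y <= - eta1 -> eta <= eta1 -> Gt h q c eta t y = Gt h q c eta1 t y.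
Proof. intros H1 H2. unfold Gt. rewrite !Rmin_left by lra. reflexivity. Qed.

Lemma margin (Y : R -> R) a b e : (forall t, continuous Y t) -> a <= b -> 0 < e ->
  (forall t, a <= t <= b -> Y t <= - 2 * e) -> exists d, 0 < d /\ forall t, a - d < t < b + d -> Y t < - e.
Proof.
  intros Hc Hab He HY.
  clear Hh Hq.
  assert (Ha := proj1 (filterlim_locally _ _) (Hc a) (mkposreal e He)).
  assert (Hb := proj1 (filterlim_locally _ _) (Hc b) (mkposreal e He)).
  destruct Ha as [da Hda]. destruct Hb as [db Hdb].
  exists (Rmin da db). split. apply Rmin_glb_lt; apply cond_pos.
  intros t Ht. assert (Rmin da db <= da) by apply Rmin_l. assert (Rmin da db <= db) by apply Rmin_r.
  destruct (Rlt_or_le t a) as [Hta|Hta].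
  - assert (HH : Rabs (Y t - Y a) < e).
    { apply ball_R. apply Hda. apply ball_R. rewrite Rabs_left; simpl; lra. }
    specialize (HY a ltac:(lra)). apply Rabs_def2 in HH. lra.
  - destruct (Rle_or_lt t b) as [Htb|Htb].
    + specialize (HY t ltac:(lra)). lra.
    + assert (HH : Rabs (Y t - Y b) < e).
      { apply ball_R. apply Hdb. apply ball_R. rewrite Rabs_right; simpl; lra. }
      specialize (HY b ltac:(lra)). apply Rabs_def2 in HH. lra.
Qed.

Lemma dep_lemma eta : 0 < eta -> exists K, 0 < K /\ forall c1 c2 (Y1 Y2 : R -> R) a b x0,
  0 <= a -> a <= x0 -> x0 <= b -> b <= 1 ->
  (forall t, a <= t <= b -> is_derive Y1 t (Gt h q c1 eta t (Y1 t)) /\ is_derive Y2 t (Gt h q c2 eta t (Y2 t))) ->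
  forall t, a <= t <= b -> (Y1 t - Y2 t) ^ 2 <= K * ((Y1 x0 - Y2 x0) ^ 2 + (c1 - c2) ^ 2).
Proof.
  intros He. destruct (qe_bound _ Hq) as [Qm [HQm HQ]].
  set (L := Qm / eta ^ 2 + 1).
  assert (HL : 0 <= L) by (unfold L; assert (0 <= Qm / eta ^ 2) by (apply Rmult_le_pos; [lra| apply Rlt_le, Rinv_0_lt_compat; nra]); lra).
  exists (exp (2 * L + 1)). split. apply exp_pos.
  intros c1 c2 Y1 Y2 a b x0 Ha Hax Hxb Hb Hd t Ht.
  assert (Hbound : forall u, a <= u <= b -> Rabs (Gt h q c1 eta u (Y1 u) - Gt h q c2 eta u (Y2 u)) <= L * Rabs (Y1 u - Y2 u) + Rabs (c1 - c2)).
  { intros u Hu. replace (Gt h q c1 eta u (Y1 u) - Gt h q c2 eta u (Y2 u)) with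
      ((Gt h q c1 eta u (Y1 u) - Gt h q c1 eta u (Y2 u)) + (c2 - c1)) by (unfold Gt; ring).
    apply Rle_trans with (1 := Rabs_triang _ _). rewrite (Rabs_minus_sym c2 c1).
    apply Rplus_le_compat_r. apply (Gt_lip h q Hq c1 eta Qm He HQ). }
  assert (Hce : (Rabs (c1 - c2)) ^ 2 = (c1 - c2) ^ 2) by (unfold Rabs; destruct Rcase_abs; ring).
  assert (0 <= (Y1 x0 - Y2 x0) ^ 2 + (c1 - c2) ^ 2) by (assert (H1 := pow2_ge_0 (Y1 x0 - Y2 x0)); assert (H2 := pow2_ge_0 (c1 - c2)); lra).
  destruct (Rle_or_lt x0 t) as [Hxt|Hxt].
  - assert (HG := gronwall_fwd Y1 Y2 (fun u => Gt h q c1 eta u (Y1 u)) (fun u => Gt h q c2 eta u (Y2 u)) L (Rabs (c1 - c2)) x0 b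
      Hxb HL (Rabs_pos _) (fun u Hu => Hd u ltac:(lra)) (fun u Hu => Hbound u ltac:(lra)) t ltac:(lra)).
    rewrite Hce in HG. apply Rle_trans with (1 := HG). rewrite Rmult_comm. apply Rmult_le_compat_r; auto.
    destruct (Req_dec ((2 * L + 1) * (t - x0)) (2 * L + 1)) as [E|E]; [rewrite E; lra|].
    left. apply exp_increasing. assert (t - x0 <= 1) by lra. nra.
  - assert (HG := gronwall_bwd Y1 Y2 (fun u => Gt h q c1 eta u (Y1 u)) (fun u => Gt h q c2 eta u (Y2 u)) L (Rabs (c1 - c2)) a x0
      Hax HL (Rabs_pos _) (fun u Hu => Hd u ltac:(lra)) (fun u Hu => Hbound u ltac:(lra)) t ltac:(lra)).
    rewrite Hce in HG. apply Rle_trans with (1 := HG). rewrite Rmult_comm. apply Rmult_le_compat_r; auto.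
    destruct (Req_dec ((2 * L + 1) * (x0 - t)) (2 * L + 1)) as [E|E]; [rewrite E; lra|].
    left. apply exp_increasing. assert (x0 - t <= 1) by lra. nra.
Qed.

Lemma uniq_lemma c eta (Y1 Y2 : R -> R) a b x0 : 0 < eta ->
  0 <= a -> a <= x0 -> x0 <= b -> b <= 1 ->
  (forall t, a <= t <= b -> is_derive Y1 t (Gt h q c eta t (Y1 t)) /\ is_derive Y2 t (Gt h q c eta t (Y2 t))) ->
  Y1 x0 = Y2 x0 -> forall t, a <= t <= b -> Y1 t = Y2 t.
Proof.
  intros He Ha Hax Hxb Hb Hd Heq t Ht.
  destruct (dep_lemma eta He) as [K [HK HKd]].
  assert (H := HKd c c Y1 Y2 a b x0 Ha Hax Hxb Hb Hd t Ht).
  rewrite Heq in H. replace ((Y2 x0 - Y2 x0) ^ 2 + (c - c) ^ 2) with 0 in H by ring.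
  rewrite Rmult_0_r in H. assert (H2 := pow2_ge_0 (Y1 t - Y2 t)).
  assert (HZ : (Y1 t - Y2 t) ^ 2 = 0) by lra. simpl in HZ. rewrite Rmult_1_r in HZ. apply Rmult_integral in HZ. lra.
Qed.


Lemma D_deriv c (Z V rho : R -> R) t : Z t < 0 -> V t < 0 ->
  is_derive Z t (Ft c t (Z t)) -> is_derive V t (Ft c t (V t) - rho t) ->
  is_derive (fun u => Z u - V u) t ((q t / (Z t * V t)) * (Z t - V t) + rho t).
Proof.
  intros HZ HV H1 H2. assert (H := is_derive_minus Z V t _ _ H1 H2).
  change (is_derive (fun u => Z u - V u) t (Ft c t (Z t) - (Ft c t (V t) - rho t))) in H.
  replace (q t / (Z t * V t) * (Z t - V t) + rho t) with (Ft c t (Z t) - (Ft c t (V t) - rho t)).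
  exact H. unfold Ft. field. split; lra.
Qed.

Lemma g_cont (Z V : R -> R) t : 0 < t < 1 -> continuous Z t -> continuous V t -> Z t < 0 -> V t < 0 ->
  continuous (fun u => q u / (Z u * V u)) t.
Proof.
  intros Ht HZ HV HZn HVn.
  assert (Hm : continuous (fun u => Z u * V u) t) by exact (continuous_mult Z V t HZ HV).
  assert (Hi := continuous_Rinv_comp _ _ Hm ltac:(nra)).
  exact (continuous_mult q _ t (cont_int q t (proj1 Hq) Ht) Hi).
Qed.

Definition tsol_pair c (Z V rho : R -> R) al be :=
  forall t, al < t < be -> Z t < 0 /\ V t < 0 /\ is_derive Z t (Ft c t (Z t)) /\ is_derive V t (Ft c t (V t) - rho t).



Lemma pair_hyp c Z V rho al be : 0 <= al -> be <= 1 -> tsol_pair c Z V rho al be ->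
  forall t, al < t < be -> continuous (fun u => q u / (Z u * V u)) t /\
    is_derive (fun u => Z u - V u) t ((fun u => q u / (Z u * V u)) t * (fun u => Z u - V u) t + rho t).
Proof.
  intros Hal Hbe Hp t Ht. destruct (Hp t Ht) as [HZ [HV [H1 H2]]]. split.
  - apply g_cont; auto. lra. apply (ex_derive_continuous Z); eexists; exact H1.
    apply (ex_derive_continuous V); eexists; exact H2.
  - apply (D_deriv c); auto.
Qed.

Lemma cmp_fwd c Z V rho al be a b : 0 <= al -> al < a -> a <= b -> b < be -> be <= 1 ->
  tsol_pair c Z V rho al be -> (forall t, a <= t <= b -> 0 <= rho t) ->
  V a <= Z a -> forall t, a <= t <= b -> V t <= Z t.
Proof.
  intros H0 H1 H2 H3 H4 Hp Hr Ha t Ht.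
  assert (HE := E_lemma (fun u => Z u - V u) (fun u => q u / (Z u * V u)) rho al be a b H1 H2 H3
    (pair_hyp c Z V rho al be H0 H4 Hp) Hr a t ltac:(lra) ltac:(lra) ltac:(lra)).
  simpl in HE.
  assert (0 <= (Z a - V a) * exp (- RInt (fun u => q u / (Z u * V u)) a a)) by (apply Rmult_le_pos; [lra| apply Rlt_le, exp_pos]).
  assert (Hp2 := exp_pos (- RInt (fun u => q u / (Z u * V u)) a t)).
  assert (0 <= Z t - V t).
  { apply Rnot_lt_le. intro Hn. assert ((Z t - V t) * exp (- RInt (fun u => q u / (Z u * V u)) a t) < 0).
    apply Rmult_neg_pos; auto. lra. }
  lra.
Qed.

Lemma cmp_bwd c Z V rho al be a b : 0 <= al -> al < a -> a <= b -> b < be -> be <= 1 ->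
  tsol_pair c Z V rho al be -> (forall t, a <= t <= b -> rho t <= 0) ->
  V b <= Z b -> forall t, a <= t <= b -> V t <= Z t.
Proof.
  intros H0 H1 H2 H3 H4 Hp Hr Hb t Ht.
  assert (HE := E_lemma_neg (fun u => Z u - V u) (fun u => q u / (Z u * V u)) rho al be a b H1 H2 H3
    (pair_hyp c Z V rho al be H0 H4 Hp) Hr t b ltac:(lra) ltac:(lra) ltac:(lra)).
  simpl in HE.
  assert (0 <= (Z b - V b) * exp (- RInt (fun u => q u / (Z u * V u)) a b)) by (apply Rmult_le_pos; [lra| apply Rlt_le, exp_pos]).
  assert (Hp2 := exp_pos (- RInt (fun u => q u / (Z u * V u)) a t)).
  assert (0 <= Z t - V t).
  { apply Rnot_lt_le. intro Hn. assert ((Z t - V t) * exp (- RInt (fun u => q u / (Z u * V u)) a t) < 0).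
    apply Rmult_neg_pos; auto. lra. }
  lra.
Qed.

Lemma cmp_eq c Z V al be a b : 0 <= al -> al < a -> a <= b -> b < be -> be <= 1 ->
  tsol_pair c Z V (fun _ => 0) al be ->
  forall t, a <= t <= b -> Z t - V t = (Z a - V a) * exp (RInt (fun u => q u / (Z u * V u)) a t).
Proof.
  intros H0 H1 H2 H3 H4 Hp t Ht.
  apply (E_lemma_eq (fun u => Z u - V u) (fun u => q u / (Z u * V u)) al be a b H1 H2 H3); auto.
  intros u Hu. destruct (pair_hyp c Z V _ al be H0 H4 Hp u Hu) as [A B]. split; auto.
  rewrite Rplus_0_r in B. exact B.
Qed.


Lemma sol_props c eta x0 s : 0 < eta -> 0 <= x0 <= 1 ->
  sol h q c eta x0 s x0 = s /\ (forall t, continuous (sol h q c eta x0 s) t) /\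
  (forall t, -1 < t < 2 -> is_derive (sol h q c eta x0 s) t (Gt h q c eta t (sol h q c eta x0 s t))).
Proof. intros He Hx. apply (sol_spec h q Hh Hq c eta x0 s He). lra. Qed.

Definition bnd c eta x0 s a b := 0 < eta /\ forall t, a <= t <= b -> sol h q c eta x0 s t <= - eta.

Lemma coincide c x0 s e1 e2 a1 b1 a2 b2 : 0 <= x0 <= 1 -> 0 <= a1 -> 0 <= a2 -> b1 <= 1 -> b2 <= 1 ->
  a1 <= x0 <= b1 -> a2 <= x0 <= b2 -> bnd c e1 x0 s a1 b1 -> bnd c e2 x0 s a2 b2 ->
  forall t, Rmax a1 a2 <= t <= Rmin b1 b2 -> sol h q c e1 x0 s t = sol h q c e2 x0 s t.
Proof.
  intros Hx Ha1 Ha2 Hb1 Hb2 H1 H2 [He1 Hs1] [He2 Hs2] t Ht.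
  destruct (sol_props c e1 x0 s He1 Hx) as [S1 [_ D1]].
  destruct (sol_props c e2 x0 s He2 Hx) as [S2 [_ D2]].
  set (e := Rmin e1 e2).
  assert (He : 0 < e) by (apply Rmin_glb_lt; lra).
  assert (Hmax1 : a1 <= Rmax a1 a2) by apply Rmax_l. assert (Hmax2 : a2 <= Rmax a1 a2) by apply Rmax_r.
  assert (Hmin1 : Rmin b1 b2 <= b1) by apply Rmin_l. assert (Hmin2 : Rmin b1 b2 <= b2) by apply Rmin_r.
  apply (uniq_lemma c e _ _ (Rmax a1 a2) (Rmin b1 b2) x0 He).
  - apply Rmax_case; lra.
  - apply Rmax_case; lra.
  - apply Rmin_case; lra.
  - lra.
  - intros u Hu. split.
    + rewrite (Gt_eta c e e1 u _ (Hs1 u ltac:(lra)) (Rmin_l _ _)). apply D1. lra.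
    + rewrite (Gt_eta c e e2 u _ (Hs2 u ltac:(lra)) (Rmin_r _ _)). apply D2. lra.
  - rewrite S1, S2; reflexivity.
  - exact Ht.
Qed.

Definition ab_l (t x0 : R) := Rmin t x0 / 2.
Definition ab_r (t x0 : R) := (Rmax t x0 + 1) / 2.

Definition eta_of c x0 s t := epsilon (inhabits 1) (fun e => bnd c e x0 s (ab_l t x0) (ab_r t x0)).

Definition Zb c x0 s t := sol h q c (eta_of c x0 s t) x0 s t.

Lemma build c x0 s : 0 < x0 < 1 ->
  (forall a b, 0 < a -> a <= x0 -> x0 <= b -> b < 1 -> exists e, bnd c e x0 s a b) ->
  Zb c x0 s x0 = s /\ forall t, 0 < t < 1 -> Zb c x0 s t < 0 /\ is_derive (Zb c x0 s) t (Ft c t (Zb c x0 s t)).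
Proof.
  intros Hx Hyp.
  assert (Heta : forall t, 0 < t < 1 -> bnd c (eta_of c x0 s t) x0 s (ab_l t x0) (ab_r t x0)).
  { intros t Ht. unfold eta_of. apply epsilon_spec. apply Hyp; unfold ab_l, ab_r.
    - apply Rmin_case; lra.
    - assert (Rmin t x0 <= x0) by apply Rmin_r. lra.
    - assert (x0 <= Rmax t x0) by apply Rmax_r. lra.
    - apply Rmax_case; lra. }
  assert (Hab : forall t, 0 < t < 1 -> 0 < ab_l t x0 < t /\ ab_l t x0 < x0 /\ t < ab_r t x0 < 1 /\ x0 < ab_r t x0).
  { intros t Ht. unfold ab_l, ab_r.
    assert (Rmin t x0 <= t) by apply Rmin_l. assert (Rmin t x0 <= x0) by apply Rmin_r.
    assert (t <= Rmax t x0) by apply Rmax_l. assert (x0 <= Rmax t x0) by apply Rmax_r.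
    assert (0 < Rmin t x0) by (apply Rmin_glb_lt; lra). assert (Rmax t x0 < 1) by (apply Rmax_lub_lt; lra).
    lra. }
  split.
  - unfold Zb. destruct (Heta x0 Hx) as [He _]. apply (sol_props c _ x0 s He). lra.
  - intros t Ht. destruct (Heta t Ht) as [He Hb]. destruct (Hab t Ht) as [A1 [A2 [A3 A4]]].
    split.
    + unfold Zb. specialize (Hb t ltac:(lra)). lra.
    +
      apply is_derive_ext_loc with (sol h q c (eta_of c x0 s t) x0 s).
      * generalize (locally_interval (ab_l t x0) (ab_r t x0) t ltac:(lra)). apply filter_imp.
        intros u Hu. assert (Hu01 : 0 < u < 1) by lra.
        destruct (Heta u Hu01) as [Heu Hbu]. destruct (Hab u Hu01) as [B1 [B2 [B3 B4]]].
        unfold Zb. apply (coincide c x0 s _ _ (ab_l t x0) (ab_r t x0) (ab_l u x0) (ab_r u x0)); try lra.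
        split; auto. split; auto.
        split. apply Rmax_lub; lra. apply Rmin_glb; lra.
      * destruct (sol_props c _ x0 s He ltac:(lra)) as [_ [_ D]].
        unfold Zb. rewrite <- (Gt_true c (eta_of c x0 s t) t _ Ht (Hb t ltac:(lra))). apply D. lra.
Qed.

End Main2.

Section Main3.
Variables (h q : R -> R).
Hypothesis Hh : cont01 h.
Hypothesis Hq : cond_q q.

Definition eps_hit qm K D := Rmin 1 (Rmin (qm / (4 * K + 4)) (qm * D / 4)).

Lemma eps_hit_pos qm K D : 0 < qm -> 0 <= K -> 0 < D -> 0 < eps_hit qm K D.
Proof.
  intros. unfold eps_hit. apply Rmin_glb_lt. lra. apply Rmin_glb_lt.
  apply Rdiv_lt_0_compat; lra. apply Rdiv_lt_0_compat; nra.
Qed.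

Lemma hitting c (Z : R -> R) al be a D qm K : 0 <= al -> al < a -> 0 < D -> a + D < be -> be <= 1 ->
  0 < qm -> 0 <= K ->
  (forall t, al < t < be -> Z t < 0 /\ is_derive Z t (Ft h q c t (Z t))) ->
  (forall t, a <= t <= a + D -> qm <= q t) ->
  (forall t, a <= t <= a + D -> - K <= h t - c) ->
  Z a < - eps_hit qm K D.
Proof.
  intros Hal Ha HD Hbe Hbe1 Hqm HK HZ Hqb Hhb.
  set (e := eps_hit qm K D).
  assert (He : 0 < e) by (apply eps_hit_pos; auto).
  assert (He1 : e <= 1) by apply Rmin_l.
  assert (He2 : e <= qm / (4 * K + 4)) by (eapply Rle_trans; [apply Rmin_r| apply Rmin_l]).
  assert (He3 : e <= qm * D / 4) by (eapply Rle_trans; [apply Rmin_r| apply Rmin_r]).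
  apply Rnot_le_lt. intro Hza.
  destruct (HZ a ltac:(lra)) as [Za0 _].
  set (R := qm / (2 * e)).
  assert (HR : 0 < R) by (apply Rdiv_lt_0_compat; lra).
  set (ts := a - Z a / R).
  assert (Hts1 : a < ts).
  { unfold ts. assert (0 < - Z a / R) by (apply Rdiv_lt_0_compat; lra). unfold Rdiv in *. lra. }
  assert (Hts2 : ts <= a + e / R).
  { unfold ts. assert (- Z a <= e) by lra. unfold Rdiv.
    assert (0 < / R) by (apply Rinv_0_lt_compat; lra). nra. }
  assert (HeR : e / R <= D / 2).
  { unfold R. replace (e / (qm / (2 * e))) with (2 * e * e / qm) by (field; lra).
    apply Rmult_le_reg_r with qm; auto. unfold Rdiv. rewrite Rmult_assoc, Rinv_l, Rmult_1_r by lra.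
    assert (e * qm <= qm * D / 4 * qm) by (apply Rmult_le_compat_r; lra).
    assert (e * e <= e * 1) by (apply Rmult_le_compat_l; lra).
    assert (2 * e * e <= 2 * e * (qm * D / 4)) by (apply Rmult_le_compat_l; lra). nra. }
  set (l := fun t => Z a + R * (t - a)).
  assert (Hlneg : forall t, t < ts -> l t < 0).
  { intros t Ht. unfold l. unfold ts in Ht.
    assert (R * (t - a) < - Z a).
    { apply Rmult_lt_compat_l with (r := R) in Ht; auto.
      replace (R * (a - Z a / R)) with (R * a - Z a) in Ht by (field; lra). lra. }
    lra. }
  assert (Hlge : forall t, a <= t -> - e <= l t).
  { intros t Ht. unfold l. assert (0 <= R * (t - a)) by (apply Rmult_le_pos; lra). lra. }
  assert (Hpair : tsol_pair h q c Z l (fun t => Ft h q c t (l t) - R) al ts).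
  { intros t Ht. destruct (HZ t ltac:(lra)) as [Z1 Z2]. split; auto. split. apply Hlneg; lra.
    split; auto. replace (Ft h q c t (l t) - (Ft h q c t (l t) - R)) with R by ring.
    unfold l. auto_derive; auto. ring. }
  assert (Hcmp : forall d, 0 < d <= ts - a -> Z (ts - d) >= - R * d).
  { intros d Hd.
    assert (H := cmp_fwd h q Hq c Z l (fun t => Ft h q c t (l t) - R) al ts a (ts - d) Hal Ha ltac:(lra) ltac:(lra) ltac:(lra) Hpair).
    assert (Hle : l (ts - d) <= Z (ts - d)).
    { apply H.
      - intros t Ht. unfold Ft.
        assert (Hl1 := Hlneg t ltac:(lra)). assert (Hl2 := Hlge t ltac:(lra)).
        assert (Hq1 := Hqb t ltac:(lra)). assert (Hh1 := Hhb t ltac:(lra)).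
        assert (Hql : qm / e <= - (q t / l t)).
        { replace (- (q t / l t)) with (q t / (- l t)) by (field; lra).
          apply Rle_trans with (q t / e).
          - unfold Rdiv. apply Rmult_le_compat_r; [apply Rlt_le, Rinv_0_lt_compat; lra| lra].
          - unfold Rdiv. apply Rmult_le_compat_l; [lra|]. apply Rinv_le_contravar; lra. }
        assert (HR2 : R + K <= qm / e).
        { unfold R. assert (qm / e = 2 * (qm / (2 * e))) by (field; lra).
          assert (2 * K + 2 <= qm / (2 * e)).
          { apply Rmult_le_reg_r with (2 * e); [lra|]. unfold Rdiv.
            rewrite Rmult_assoc, Rinv_l, Rmult_1_r by lra.
            apply Rmult_le_compat_l with (r := 4 * K + 4) in He2; [|lra].
            replace ((4 * K + 4) * (qm / (4 * K + 4))) with qm in He2 by (field; lra). lra. }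
          lra. }
        lra.
      - unfold l. replace (a - a) with 0 by ring. lra.
      - lra. }
    unfold l in Hle. unfold ts in Hle |- *.
    replace (Z a + R * (a - Z a / R - d - a)) with (- R * d) in Hle by (field; lra). lra. }
  destruct (HZ ts ltac:(lra)) as [Zts HDts].
  assert (Hc : continuous Z ts) by (apply (ex_derive_continuous Z); eexists; exact HDts).
  assert (Hl := proj1 (filterlim_locally _ _) Hc (mkposreal (- Z ts / 2) ltac:(lra))).
  destruct Hl as [dd Hdd].
  set (d := Rmin (Rmin (dd / 2) (ts - a)) (- Z ts / (2 * R))).
  assert (Hd1 : d <= dd / 2) by (unfold d; eapply Rle_trans; [apply Rmin_l| apply Rmin_l]).
  assert (Hd2 : d <= ts - a) by (unfold d; eapply Rle_trans; [apply Rmin_l| apply Rmin_r]).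
  assert (Hd3 : d <= - Z ts / (2 * R)) by (unfold d; apply Rmin_r).
  assert (Hd0 : 0 < d).
  { unfold d. apply Rmin_glb_lt. apply Rmin_glb_lt. assert (0 < pos dd) by apply cond_pos. lra. lra.
    apply Rdiv_lt_0_compat; lra. }
  assert (H1 := Hcmp d ltac:(lra)).
  assert (H2 : Rabs (Z (ts - d) - Z ts) < - Z ts / 2).
  { apply ball_R. apply Hdd. apply ball_R. rewrite Rabs_left by lra. assert (0 < pos dd) by apply cond_pos. lra. }
  apply Rabs_def2 in H2.
  assert (R * d <= - Z ts / 2).
  { apply Rmult_le_compat_l with (r := R) in Hd3; [|lra].
    replace (R * (- Z ts / (2 * R))) with (- Z ts / 2) in Hd3 by (field; lra). lra. }
  lra.
Qed.

End Main3.

Lemma cont_max_neg (Z : R -> R) a b : a <= b -> (forall t, a <= t <= b -> continuous Z t) ->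
  (forall t, a <= t <= b -> Z t < 0) -> exists be, 0 < be /\ forall t, a <= t <= b -> Z t <= - be.
Proof.
  intros Hab Hc Hn.
  destruct (continuity_ab_maj Z a b Hab) as [M [HM HMab]].
  { intros t Ht. apply continuity_pt_filterlim. apply Hc; auto. }
  exists (- Z M). split. specialize (Hn M HMab). lra. intros t Ht. specialize (HM t Ht). lra.
Qed.

Lemma le_at_1 (f : R -> R) x0 m : x0 < 1 -> continuous f 1 -> (forall t, x0 <= t < 1 -> f t <= m) -> f 1 <= m.
Proof.
  intros Hx Hc Hf. apply Rnot_lt_le. intro Hn.
  assert (Hl := proj1 (filterlim_locally _ _) Hc (mkposreal (f 1 - m) ltac:(lra))).
  destruct Hl as [d Hd]. set (t := Rmax x0 (1 - d / 2)).
  assert (Ht : x0 <= t < 1) by (unfold t; split; [apply Rmax_l| apply Rmax_lub_lt; [lra| assert (0 < pos d) by apply cond_pos; lra]]).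
  assert (H := Hd t). rewrite ball_R in H. simpl in H.
  assert (Rabs (f t - f 1) < f 1 - m).
  { apply H. apply ball_R. rewrite Rabs_left by lra. assert (1 - d / 2 <= t) by (unfold t; apply Rmax_r). lra. }
  apply Rabs_def2 in H0. specialize (Hf t Ht). lra.
Qed.

Lemma lim_at_1 (f g : R -> R) x0 : 0 <= x0 -> x0 < 1 -> continuous f 1 -> cont01 g -> g 1 = 0 ->
  (forall t, x0 < t < 1 -> g t <= f t) -> 0 <= f 1.
Proof.
  intros Hx0 Hx Hf Hg Hg1 Hle. apply Rnot_lt_le. intro Hn.
  assert (Hl := proj1 (filterlim_locally _ _) Hf (mkposreal (- f 1 / 2) ltac:(lra))).
  destruct Hl as [d Hd].
  destruct (cont01_ed g 1 Hg ltac:(unfold in01; lra) (- f 1 / 2) ltac:(lra)) as [d2 [Hd2 Hg2]].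
  set (t := Rmax ((x0 + 1) / 2) (1 - Rmin d d2 / 2)).
  assert (Hmd : 0 < Rmin d d2) by (apply Rmin_glb_lt; [apply cond_pos| lra]).
  assert (Hm1 : Rmin d d2 <= d) by apply Rmin_l. assert (Hm2 : Rmin d d2 <= d2) by apply Rmin_r.
  assert (Ht : x0 < t < 1) by (unfold t; split; [apply Rlt_le_trans with ((x0+1)/2); [lra| apply Rmax_l]| apply Rmax_lub_lt; lra]).
  assert (Ht2 : 1 - Rmin d d2 / 2 <= t) by (unfold t; apply Rmax_r).
  assert (H1 : Rabs (f t - f 1) < - f 1 / 2).
  { apply ball_R. apply Hd. apply ball_R. rewrite Rabs_left by lra. lra. }
  assert (H2 : Rabs (g t - g 1) < - f 1 / 2).
  { apply Hg2. unfold in01; lra. rewrite Rabs_left by lra. lra. }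
  rewrite Hg1 in H2. apply Rabs_def2 in H1. apply Rabs_def2 in H2. specialize (Hle t Ht). lra.
Qed.

Section Main4.
Variables (h q : R -> R).
Hypothesis Hh : cont01 h.
Hypothesis Hq : cond_q q.

Lemma bnd_mono c e e1 x0 s a b : bnd h q c e1 x0 s a b -> 0 < e -> e <= e1 -> 0 <= a -> a <= x0 -> x0 <= b -> b <= 1 ->
  bnd h q c e x0 s a b /\ forall t, a <= t <= b -> sol h q c e x0 s t = sol h q c e1 x0 s t.
Proof.
  intros [He1 Hb] He Hee Ha Hax Hxb Hb1.
  assert (Heq : forall t, a <= t <= b -> sol h q c e x0 s t = sol h q c e1 x0 s t).
  { destruct (sol_props h q Hh Hq c e x0 s He ltac:(lra)) as [S1 [_ D1]].
    destruct (sol_props h q Hh Hq c e1 x0 s He1 ltac:(lra)) as [S2 [_ D2]].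
    apply (uniq_lemma h q Hq c e _ _ a b x0 He Ha Hax Hxb Hb1).
    - intros u Hu. split. apply D1; lra.
      rewrite (Gt_eta h q c e e1 u _ (Hb u Hu) Hee). apply D2; lra.
    - rewrite S1, S2; reflexivity. }
  split; auto. split; auto. intros t Ht. rewrite Heq by auto. specialize (Hb t Ht). lra.
Qed.

Lemma sol_eq_true c e x0 s (Z : R -> R) a b : 0 < e -> 0 < a -> a <= x0 -> x0 <= b -> b < 1 ->
  (forall t, 0 < t < 1 -> is_derive Z t (Ft h q c t (Z t))) -> Z x0 = s ->
  (forall t, a <= t <= b -> Z t <= - e) -> forall t, a <= t <= b -> sol h q c e x0 s t = Z t.
Proof.
  intros He Ha Hax Hxb Hb HZ HZx HZb.
  destruct (sol_props h q Hh Hq c e x0 s He ltac:(lra)) as [S1 [_ D1]].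
  apply (uniq_lemma h q Hq c e _ _ a b x0 He ltac:(lra) Hax Hxb ltac:(lra)).
  - intros u Hu. split. apply D1; lra.
    rewrite (Gt_true h q c e u _ ltac:(lra) (HZb u Hu)). apply HZ; lra.
  - rewrite S1, HZx; reflexivity.
Qed.


Definition ext01 (Z : R -> R) (t : R) : R :=
  match Rlt_dec 0 t with
  | left _ => match Rlt_dec t 1 with left _ => Z t | right _ => 0 end
  | right _ => 0
  end.

Lemma ext01_in Z t : 0 < t < 1 -> ext01 Z t = Z t.
Proof. intros Ht. unfold ext01. destruct Rlt_dec; [destruct Rlt_dec|]; lra || reflexivity. Qed.

Lemma ext01_out Z t : ~ (0 < t < 1) -> ext01 Z t = 0.
Proof. intros Ht. unfold ext01. destruct Rlt_dec; [destruct Rlt_dec|]; auto. exfalso; apply Ht; lra. Qed.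

Lemma P00_of c (Z : R -> R) :
  (forall t, 0 < t < 1 -> Z t < 0 /\ is_derive Z t (Ft h q c t (Z t))) ->
  (forall eps, 0 < eps -> exists d, 0 < d /\ forall t, 0 < t < d -> Rabs (Z t) < eps) ->
  (forall eps, 0 < eps -> exists d, 0 < d /\ forall t, 1 - d < t < 1 -> Rabs (Z t) < eps) ->
  sol_P00 h q c (ext01 Z).
Proof.
  intros HZ H0 H1.
  assert (Hloc : forall t, 0 < t < 1 -> locally t (fun u => Z u = ext01 Z u)).
  { intros t Ht. generalize (locally_interval 0 1 t Ht). apply filter_imp. intros u Hu. rewrite ext01_in; auto. }
  assert (Hder : forall t, 0 < t < 1 -> is_derive (ext01 Z) t (Ft h q c t (ext01 Z t))).
  { intros t Ht. rewrite ext01_in by auto. apply is_derive_ext_loc with Z. apply Hloc; auto. apply HZ; auto. }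
  split; [split; [| split; [| split]] |].
  - intros x Hx. destruct (Rlt_dec 0 x) as [Hx0|Hx0]; [destruct (Rlt_dec x 1) as [Hx1|Hx1]|].
    + apply (filterlim_filter_le_1 _ (filter_le_within _)).
      apply (ex_derive_continuous (ext01 Z)). eexists; apply Hder; lra.
    + assert (x = 1) by (unfold in01 in Hx; lra). subst x.
      rewrite ext01_out by lra. apply filterlim_locally. intros eps.
      destruct (H1 eps (cond_pos eps)) as [d [Hd Hdd]].
      exists (mkposreal (Rmin d (1/2)) ltac:(apply Rmin_glb_lt; lra)). simpl.
      intros y Hy Hyin. apply ball_R. rewrite Rminus_0_r. apply ball_R in Hy.
      assert (Rmin d (1/2) <= d) by apply Rmin_l. assert (Rmin d (1/2) <= 1/2) by apply Rmin_r.
      unfold in01 in Hyin. change (Rabs (y - 1) < Rmin d (1/2)) in Hy. apply Rabs_def2 in Hy.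
      destruct (Rlt_dec y 1) as [Hy1|Hy1].
      * rewrite ext01_in by lra. apply Hdd. lra.
      * rewrite ext01_out by lra. rewrite Rabs_R0. apply cond_pos.
    + assert (x = 0) by (unfold in01 in Hx; lra). subst x.
      rewrite ext01_out by lra. apply filterlim_locally. intros eps.
      destruct (H0 eps (cond_pos eps)) as [d [Hd Hdd]].
      exists (mkposreal (Rmin d (1/2)) ltac:(apply Rmin_glb_lt; lra)). simpl.
      intros y Hy Hyin. apply ball_R. rewrite Rminus_0_r. apply ball_R in Hy.
      assert (Rmin d (1/2) <= d) by apply Rmin_l. assert (Rmin d (1/2) <= 1/2) by apply Rmin_r.
      unfold in01 in Hyin. change (Rabs (y - 0) < Rmin d (1/2)) in Hy. apply Rabs_def2 in Hy.
      destruct (Rlt_dec 0 y) as [Hy1|Hy1].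
      * rewrite ext01_in by lra. apply Hdd. lra.
      * rewrite ext01_out by lra. rewrite Rabs_R0. apply cond_pos.
  - intros x Hx. unfold in01o in Hx. apply Hder; auto.
  - intros x Hx. unfold in01o in Hx. rewrite ext01_in by auto. apply HZ; auto.
  - apply ext01_out. lra.
  - apply ext01_out. lra.
Qed.

End Main4.

Section NS.
Variables (h q zs : R -> R) (cs k d1 e1 x0 : R).
Hypothesis Hh : cont01 h.
Hypothesis Hq : cond_q q.
Hypothesis Hzs : forall t, 0 < t < 1 -> zs t < 0 /\ is_derive zs t (Ft h q cs t (zs t)).
Hypothesis Hzc : cont01 zs.
Hypothesis Hz0 : zs 0 = 0.
Hypothesis Hz1 : zs 1 = 0.
Hypothesis Hk : 0 < k.
Hypothesis Hd1 : 0 < d1 < 1.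
Hypothesis He1 : 0 < e1.
Hypothesis Hup : forall c t, cs - e1 <= c <= cs -> 0 < t < d1 -> Ft h q c t (- k * t) + k <= 0.
Hypothesis Hmin : forall c z, c < cs -> sol_P00 h q c z -> False.
Hypothesis Hx0 : 0 < x0 < d1.
Hypothesis Hzx : - k * x0 < zs x0.

Lemma zs_cont t : 0 < t < 1 -> continuous zs t.
Proof. intros Ht. apply (ex_derive_continuous zs). eexists; apply (Hzs t Ht). Qed.

Lemma Ft_shift c1 c2 t y : Ft h q c1 t y = Ft h q c2 t y - (c1 - c2).
Proof. unfold Ft. ring. Qed.

Lemma trap_back c s a : c <= cs -> s <= zs x0 -> 0 < a -> a <= x0 ->
  exists e, bnd h q c e x0 s a x0 /\ forall t, a <= t <= x0 -> sol h q c e x0 s t <= zs t.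
Proof.
  intros Hc Hs Ha Hax.
  destruct (cont_max_neg zs a x0 Hax (fun t Ht => zs_cont t ltac:(lra)) (fun t Ht => proj1 (Hzs t ltac:(lra)))) as [be [Hbe Hzb]].
  set (e := be / 2). assert (He : 0 < e) by (unfold e; lra).
  destruct (sol_props h q Hh Hq c e x0 s He ltac:(lra)) as [S [Cy Dy]].
  set (y := sol h q c e x0 s) in *.
  assert (Hle : forall t, a <= t <= x0 -> y t <= zs t).
  { intros t1 Ht1. apply Rnot_lt_le. intro Hn.
    assert (Ht1x : t1 < x0) by (destruct (Rle_lt_or_eq_dec t1 x0 (proj2 Ht1)) as [E|E]; [exact E| subst t1; rewrite S in Hn; lra]).
    destruct (first_crossing (fun t => y t - zs t) t1 x0 Ht1x) as [T [HT1 [HT2 HT3]]].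
    { intros t Ht. apply (continuous_minus y zs t). apply Cy. apply zs_cont; lra. }
    { lra. } { rewrite S. lra. }
    simpl in HT2, HT3.
    assert (HyT : y T <= - 2 * e) by (assert (H := Hzb T ltac:(lra)); unfold e; lra).
    destruct (margin y T T e Cy ltac:(lra) He (fun t Ht => ltac:(replace t with T by lra; exact HyT))) as [dl [Hdl Hdly]].
    set (al := Rmax (T - dl) (t1 / 2)). set (a' := Rmax t1 (T - dl / 2)). set (bb := Rmin (T + dl) 1).
    assert (Hal0 : 0 <= al) by (unfold al; eapply Rle_trans; [| apply Rmax_r]; lra).
    assert (Hala : al < a') by (unfold al, a'; apply Rmax_lub_lt; [eapply Rlt_le_trans; [| apply Rmax_r]; lra| eapply Rlt_le_trans; [| apply Rmax_l]; lra]).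
    assert (HaT : a' < T) by (unfold a'; apply Rmax_lub_lt; lra).
    assert (HTb : T < bb) by (unfold bb; apply Rmin_glb_lt; lra).
    assert (Hb1 : bb <= 1) by (unfold bb; apply Rmin_r).
    assert (Hpair : tsol_pair h q cs zs y (fun _ => c - cs) al bb).
    { intros t Ht.
      assert (Ht1' : T - dl < t < T + dl).
      { split. eapply Rle_lt_trans; [apply Rmax_l| exact (proj1 Ht)]. eapply Rlt_le_trans; [exact (proj2 Ht)| apply Rmin_l]. }
      assert (Ht01 : 0 < t < 1).
      { assert (t1/2 <= al) by (unfold al; apply Rmax_r). lra. }
      destruct (Hzs t Ht01) as [Z1 Z2]. assert (Hyt := Hdly t Ht1').
      split; auto. split; [lra|]. split; auto.
      rewrite <- Ft_shift. rewrite <- (Gt_true h q c e t (y t) Ht01 ltac:(lra)). apply Dy. lra. }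
    assert (H := cmp_bwd h q Hq cs zs y (fun _ => c - cs) al bb a' T Hal0 Hala ltac:(lra) HTb Hb1 Hpair
      ltac:(intros; lra) ltac:(lra) a' ltac:(lra)).
    assert (H2 := HT3 a' ltac:(split; [unfold a'; apply Rmax_l| exact HaT])). lra. }
  exists e. split.
  - split; auto. intros t Ht. change (y t <= - e). assert (H1 := Hle t Ht). assert (H2 := Hzb t Ht).
    assert (e = be / 2) by reflexivity. lra.
  - exact Hle.
Qed.

Lemma trap_fwd s b : s < zs x0 -> x0 <= b -> b < 1 ->
  exists e, bnd h q cs e x0 s x0 b /\ forall t, x0 <= t <= b -> sol h q cs e x0 s t <= zs t.
Proof.
  intros Hs Hxb Hb.
  destruct (cont_max_neg zs x0 b Hxb (fun t Ht => zs_cont t ltac:(lra)) (fun t Ht => proj1 (Hzs t ltac:(lra)))) as [be [Hbe Hzb]].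
  set (e := be / 2). assert (He : 0 < e) by (unfold e; lra).
  destruct (sol_props h q Hh Hq cs e x0 s He ltac:(lra)) as [S [Cy Dy]].
  set (y := sol h q cs e x0 s) in *.
  assert (Hle : forall t, x0 <= t <= b -> y t <= zs t).
  { intros t1 Ht1. apply Rnot_lt_le. intro Hn.
    assert (Ht1x : x0 < t1) by (destruct (Rle_lt_or_eq_dec x0 t1 (proj1 Ht1)) as [E|E]; [exact E| subst t1; rewrite S in Hn; lra]).
    destruct (first_crossing (fun t => zs t - y t) x0 t1 Ht1x) as [T [HT1 [HT2 HT3]]].
    { intros t Ht. apply (continuous_minus zs y t). apply zs_cont; lra. apply Cy. }
    { rewrite S. lra. } { lra. }
    simpl in HT2, HT3.
    assert (HyT : y T <= - 2 * e) by (assert (H := Hzb T ltac:(lra)); unfold e; lra).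
    destruct (margin y T T e Cy ltac:(lra) He (fun t Ht => ltac:(replace t with T by lra; exact HyT))) as [dl [Hdl Hdly]].
    set (al := Rmax (T - dl) (x0 / 2)). set (a' := Rmax x0 (T - dl / 2)). set (bb := Rmin (T + dl) 1).
    assert (Hal0 : 0 <= al) by (unfold al; eapply Rle_trans; [| apply Rmax_r]; lra).
    assert (Hala : al < a') by (unfold al, a'; apply Rmax_lub_lt; [eapply Rlt_le_trans; [| apply Rmax_r]; lra| eapply Rlt_le_trans; [| apply Rmax_l]; lra]).
    assert (HaT : a' < T) by (unfold a'; apply Rmax_lub_lt; lra).
    assert (HTb : T < bb) by (unfold bb; apply Rmin_glb_lt; lra).
    assert (Hb1 : bb <= 1) by (unfold bb; apply Rmin_r).
    assert (Hpair : tsol_pair h q cs y zs (fun _ => 0) al bb).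
    { intros t Ht.
      assert (Ht1' : T - dl < t < T + dl).
      { split. eapply Rle_lt_trans; [apply Rmax_l| exact (proj1 Ht)]. eapply Rlt_le_trans; [exact (proj2 Ht)| apply Rmin_l]. }
      assert (Ht01 : 0 < t < 1).
      { assert (x0/2 <= al) by (unfold al; apply Rmax_r). lra. }
      destruct (Hzs t Ht01) as [Z1 Z2]. assert (Hyt := Hdly t Ht1').
      split; [lra|]. split; auto. split.
      rewrite <- (Gt_true h q cs e t (y t) Ht01 ltac:(lra)). apply Dy. lra.
      rewrite Rminus_0_r. exact Z2. }
    assert (H := cmp_bwd h q Hq cs y zs (fun _ => 0) al bb a' T Hal0 Hala ltac:(lra) HTb Hb1 Hpair
      ltac:(intros; lra) ltac:(lra) a' ltac:(lra)).
    assert (H2 := HT3 a' ltac:(split; [unfold a'; apply Rmax_l| exact HaT])). lra. }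
  exists e. split.
  - split; auto. intros t Ht. change (y t <= - e). assert (H1 := Hle t Ht). assert (H2 := Hzb t Ht).
    assert (e = be / 2) by reflexivity. lra.
  - exact Hle.
Qed.


Lemma combine_bnd c ea eb s a b : bnd h q c ea x0 s a x0 -> bnd h q c eb x0 s x0 b -> 0 <= a -> a <= x0 -> x0 <= b -> b <= 1 ->
  bnd h q c (Rmin ea eb) x0 s a b.
Proof.
  intros B1 B2 Ha Hax Hxb Hb.
  assert (He : 0 < Rmin ea eb) by (apply Rmin_glb_lt; [exact (proj1 B1)| exact (proj1 B2)]).
  destruct (bnd_mono h q Hh Hq c _ ea x0 s a x0 B1 He (Rmin_l _ _) Ha Hax ltac:(lra) ltac:(lra)) as [[_ C1] _].
  destruct (bnd_mono h q Hh Hq c _ eb x0 s x0 b B2 He (Rmin_r _ _) ltac:(lra) ltac:(lra) Hxb Hb) as [[_ C2] _].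
  split; auto. intros t Ht. destruct (Rle_or_lt t x0). apply C1; lra. apply C2; lra.
Qed.

Definition s0 := - k * x0.

Lemma Y_hyp : forall a b, 0 < a -> a <= x0 -> x0 <= b -> b < 1 -> exists e, bnd h q cs e x0 s0 a b.
Proof.
  intros a b Ha Hax Hxb Hb.
  destruct (trap_back cs s0 a ltac:(lra) ltac:(unfold s0; lra) Ha Hax) as [ea [Ba _]].
  destruct (trap_fwd s0 b ltac:(unfold s0; lra) Hxb Hb) as [eb [Bb _]].
  exists (Rmin ea eb). apply combine_bnd; auto; lra.
Qed.

Definition Good c s := exists eta, 0 < eta /\ forall t, x0 <= t <= 1 -> sol h q c eta x0 s t <= - 2 * eta.

Lemma Good_of_true c s (Z : R -> R) g : 0 < g -> (forall t, 0 < t < 1 -> is_derive Z t (Ft h q c t (Z t))) ->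
  Z x0 = s -> (forall t, x0 <= t < 1 -> Z t <= - g) -> Good c s.
Proof.
  intros Hg HZ HZx HZb. exists (g / 2). split. lra.
  destruct (sol_props h q Hh Hq c (g/2) x0 s ltac:(lra) ltac:(lra)) as [_ [Cs _]].
  assert (Hlt : forall t, x0 <= t < 1 -> sol h q c (g/2) x0 s t <= - g).
  { intros t Ht. rewrite (sol_eq_true h q Hh Hq c (g/2) x0 s Z x0 t ltac:(lra) ltac:(lra) ltac:(lra) ltac:(lra) ltac:(lra) HZ HZx).
    apply HZb; lra. intros u Hu. assert (H := HZb u ltac:(lra)). lra. lra. }
  intros t Ht. destruct (Rlt_or_le t 1) as [Ht1|Ht1].
  - assert (H := Hlt t ltac:(lra)). lra.
  - replace t with 1 by lra. assert (H := le_at_1 (sol h q c (g/2) x0 s) x0 (- g) ltac:(lra) (Cs 1) Hlt). lra.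
Qed.

Lemma Good_cs : Good cs s0.
Proof.
  destruct (build h q Hh Hq cs x0 s0 ltac:(lra) Y_hyp) as [HYx HY].
  set (Y := Zb h q cs x0 s0) in *.
  set (D0 := zs x0 - s0). assert (HD0 : 0 < D0) by (unfold D0, s0; lra).
  apply (Good_of_true cs s0 Y D0 HD0 (fun t Ht => proj2 (HY t Ht)) HYx).
  intros t Ht.
  assert (Hpair : tsol_pair h q cs zs Y (fun _ => 0) (x0 / 2) ((t + 1) / 2)).
  { intros u Hu. destruct (Hzs u ltac:(lra)) as [Z1 Z2]. destruct (HY u ltac:(lra)) as [Y1 Y2].
    split; auto. split; auto. split; auto. rewrite Rminus_0_r; auto. }
  assert (E := cmp_eq h q Hq cs zs Y (x0/2) ((t+1)/2) x0 t ltac:(lra) ltac:(lra) ltac:(lra) ltac:(lra) ltac:(lra) Hpair t ltac:(lra)).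
  rewrite HYx in E.
  assert (Hi : 0 <= RInt (fun u => q u / (zs u * Y u)) x0 t).
  { apply RInt_ge_0. lra.
    apply (@ex_RInt_continuous R_CompleteNormedModule). intros z Hz.
    rewrite Rmin_left in Hz by lra. rewrite Rmax_right in Hz by lra.
    exact (proj1 (pair_hyp h q Hq cs zs Y _ (x0/2) ((t+1)/2) ltac:(lra) ltac:(lra) Hpair z ltac:(lra))).
    intros u Hu. destruct (Hzs u ltac:(lra)) as [Z1 _]. destruct (HY u ltac:(lra)) as [Y1 _].
    apply Rmult_le_pos. apply q_nonneg; auto. unfold in01; lra. apply Rlt_le, Rinv_0_lt_compat. nra. }
  assert (He : 1 <= exp (RInt (fun u => q u / (zs u * Y u)) x0 t)) by (apply exp_ge1; auto).
  assert (Hz := proj1 (Hzs t ltac:(lra))).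
  fold D0 in E. assert (D0 <= D0 * exp (RInt (fun u => q u / (zs u * Y u)) x0 t)) by nra.
  lra.
Qed.


Lemma Rabs_sq2 x : Rabs x ^ 2 = x ^ 2.
Proof. unfold Rabs; destruct Rcase_abs; ring. Qed.

Lemma sq_le x m : 0 <= m -> x ^ 2 <= m ^ 2 -> - m <= x <= m.
Proof. intros Hm H. split; nra. Qed.

Lemma good_perturb c s : Good c s -> exists r, 0 < r /\ forall c2 s2, Rabs (c2 - c) <= r -> Rabs (s2 - s) <= r -> Good c2 s2.
Proof.
  intros [eta [He Hg]].
  destruct (dep_lemma h q Hq eta He) as [K [HK Hdep]].
  exists (eta / (2 * (K + 1))). split. apply Rdiv_lt_0_compat; lra.
  intros c2 s2 Hc Hs.
  destruct (sol_props h q Hh Hq c eta x0 s He ltac:(lra)) as [S1 [_ D1]].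
  destruct (sol_props h q Hh Hq c2 eta x0 s2 He ltac:(lra)) as [S2 [_ D2]].
  assert (Hb : forall t, x0 <= t <= 1 -> sol h q c2 eta x0 s2 t <= - eta).
  { intros t Ht.
    assert (H := Hdep c2 c (sol h q c2 eta x0 s2) (sol h q c eta x0 s) x0 1 x0 ltac:(lra) ltac:(lra) ltac:(lra) ltac:(lra)
      (fun u Hu => conj (D2 u ltac:(lra)) (D1 u ltac:(lra))) t Ht).
    rewrite S1, S2 in H.
    set (r := eta / (2 * (K + 1))) in *.
    assert (Hr : (K + 1) * r = eta / 2) by (unfold r; field; lra).
    assert (Hr0 : 0 < r) by (unfold r; apply Rdiv_lt_0_compat; lra).
    assert (Hs2 : (s2 - s) ^ 2 <= r ^ 2) by (assert (H0 := Rabs_pos (s2 - s)); rewrite <- (Rabs_sq2 (s2 - s)); nra).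
    assert (Hc2 : (c2 - c) ^ 2 <= r ^ 2) by (assert (H0 := Rabs_pos (c2 - c)); rewrite <- (Rabs_sq2 (c2 - c)); nra).
    assert (K * ((s2 - s) ^ 2 + (c2 - c) ^ 2) <= eta ^ 2).
    { apply Rle_trans with (K * (2 * r ^ 2)). apply Rmult_le_compat_l; lra.
      assert (K * r <= eta / 2) by nra. assert (r <= eta / 2) by nra. nra. }
    assert (Hsq := sq_le (sol h q c2 eta x0 s2 t - sol h q c eta x0 s t) eta ltac:(lra) ltac:(lra)).
    specialize (Hg t Ht). lra. }
  exists (eta / 2). split. lra. intros t Ht.
  destruct (bnd_mono h q Hh Hq c2 (eta/2) eta x0 s2 x0 1 (conj He Hb) ltac:(lra) ltac:(lra) ltac:(lra) ltac:(lra) ltac:(lra) ltac:(lra)) as [_ E].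
  rewrite E by auto. specialize (Hb t Ht). lra.
Qed.

Lemma exists_cp : exists cp, cs - e1 <= cp < cs /\ Good cp s0.
Proof.
  destruct (good_perturb cs s0 Good_cs) as [r [Hr Hg]].
  exists (cs - Rmin e1 r / 2).
  assert (0 < Rmin e1 r) by (apply Rmin_glb_lt; lra).
  assert (Rmin e1 r <= e1) by apply Rmin_l. assert (Rmin e1 r <= r) by apply Rmin_r.
  split. lra. apply Hg. rewrite Rabs_left by lra. lra. rewrite Rminus_diag, Rabs_R0. lra.
Qed.

Lemma not_good_s1 c : c <= cs -> ~ Good c (zs x0).
Proof.
  intros Hc [eta [He Hg]].
  destruct (sol_props h q Hh Hq c eta x0 (zs x0) He ltac:(lra)) as [S [Cy Dy]].
  set (y := sol h q c eta x0 (zs x0)) in *.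
  destruct (margin y x0 1 eta Cy ltac:(lra) He Hg) as [dl [Hdl Hy]].
  assert (Hle : forall t, x0 < t < 1 -> zs t <= y t).
  { intros t Ht.
    set (al := Rmax (x0 - dl) (x0 / 2)).
    assert (Hal1 : x0 - dl <= al) by apply Rmax_l. assert (Hal2 : x0 / 2 <= al) by apply Rmax_r.
    assert (Hal3 : al < x0) by (apply Rmax_lub_lt; lra).
    assert (Hpair : tsol_pair h q c y zs (fun _ => cs - c) al ((t + 1) / 2)).
    { intros u Hu. assert (Hu01 : 0 < u < 1) by lra. destruct (Hzs u Hu01) as [Z1 Z2].
      assert (Hyu := Hy u ltac:(lra)). split; [lra|]. split; auto. split.
      rewrite <- (Gt_true h q c eta u (y u) Hu01 ltac:(lra)). apply Dy; lra.
      rewrite <- Ft_shift. exact Z2. }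
    apply (cmp_fwd h q Hq c y zs (fun _ => cs - c) al ((t+1)/2) x0 t ltac:(lra) Hal3 ltac:(lra) ltac:(lra) ltac:(lra) Hpair
      ltac:(intros; lra) ltac:(rewrite S; lra) t ltac:(lra)). }
  assert (H := lim_at_1 y zs x0 ltac:(lra) ltac:(lra) (Cy 1) Hzc Hz1 Hle).
  specialize (Hg 1 ltac:(lra)). lra.
Qed.


Lemma sup_exists cp : Good cp s0 -> cp <= cs -> exists sh, s0 <= sh <= zs x0 /\ ~ Good cp sh /\
  (forall r, 0 < r -> exists s, Good cp s /\ sh - r < s <= sh).
Proof.
  intros Hg0 Hcp.
  set (S := fun s => s0 <= s <= zs x0 /\ Good cp s).
  assert (Hb : bound S) by (exists (zs x0); intros x [Hx _]; lra).
  assert (Hne : exists x, S x) by (exists s0; split; [unfold s0; lra| exact Hg0]).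
  destruct (completeness S Hb Hne) as [sh [Hub Hlub]].
  assert (H1 : s0 <= sh) by (apply Hub; split; [unfold s0; lra| exact Hg0]).
  assert (H2 : sh <= zs x0) by (apply Hlub; intros x [Hx _]; lra).
  exists sh. split; [lra|]. split.
  - intro Hg. destruct (good_perturb cp sh Hg) as [r [Hr Hp]].
    destruct (Rle_or_lt (zs x0) (sh + r / 2)) as [Hz|Hz].
    + apply (not_good_s1 cp Hcp). apply Hp. rewrite Rminus_diag, Rabs_R0; lra.
      rewrite Rabs_right by lra. lra.
    + assert (S (sh + r / 2)).
      { split. lra. apply Hp. rewrite Rminus_diag, Rabs_R0; lra. replace (sh + r / 2 - sh) with (r / 2) by ring.
        rewrite Rabs_right by lra. lra. }
      specialize (Hub _ H). lra.
  - intros r Hr. apply NNPP. intro Hn.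
    assert (sh <= sh - r).
    { apply Hlub. intros x [Hx Hgx]. apply Rnot_lt_le. intro Hxr. apply Hn. exists x. split; auto.
      split; [lra| apply Hub; split; auto]. }
    lra.
Qed.

Lemma fwd_bound cp sh : cs - e1 <= cp <= cs -> (forall r, 0 < r -> exists s, Good cp s /\ sh - r < s <= sh) ->
  forall b, x0 <= b < 1 -> exists e, bnd h q cp e x0 sh x0 b.
Proof.
  intros Hcp Happ b Hb.
  set (D := (1 - b) / 2). assert (HD : 0 < D) by (unfold D; lra).
  destruct (continuity_ab_min q x0 (b + D) ltac:(unfold D; lra)) as [mx [Hmx Hmxr]].
  { intros t Ht. apply continuity_pt_filterlim. apply cont_int; [exact (proj1 Hq)| unfold D in *; lra]. }
  set (qm := q mx). assert (Hqm : 0 < qm).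
  { unfold qm. destruct Hq as [_ [Hp _]]. apply Hp. unfold D in *; split; lra. }
  destruct (he_bound h Hh) as [Hm [HHm HHb]].
  set (K := Hm + Rabs cp). assert (HK : 0 <= K) by (unfold K; assert (H := Rabs_pos cp); lra).
  assert (Hhb : forall t, 0 <= t <= 1 -> - K <= h t - cp).
  { intros t Ht. assert (H := HHb t). unfold he in H. rewrite clamp01_id in H by (unfold in01; lra).
    unfold K. assert (H2 := Rle_abs cp). unfold Rabs in H; destruct Rcase_abs in H; lra. }
  set (eh := eps_hit qm K D). assert (Heh : 0 < eh) by (apply eps_hit_pos; auto).
  set (e := eh / 2). assert (He : 0 < e) by (unfold e; lra).
  assert (HA : forall s, Good cp s -> forall t, x0 <= t <= b -> sol h q cp e x0 s t <= - eh).
  { intros s [eta [Heta Hg]].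
    destruct (sol_props h q Hh Hq cp eta x0 s Heta ltac:(lra)) as [S [Cy Dy]].
    destruct (margin (sol h q cp eta x0 s) x0 1 eta Cy ltac:(lra) Heta Hg) as [dl [Hdl Hy]].
    set (y := sol h q cp eta x0 s) in *.
    set (al := Rmax (x0 - dl) (x0 / 2)).
    assert (Hal1 : x0 - dl <= al) by apply Rmax_l. assert (Hal2 : x0 / 2 <= al) by apply Rmax_r.
    assert (Hal3 : al < x0) by (apply Rmax_lub_lt; lra).
    assert (Htrue : forall u, al < u < 1 -> y u < 0 /\ is_derive y u (Ft h q cp u (y u))).
    { intros u Hu. assert (Hyu := Hy u ltac:(lra)). split. lra.
      rewrite <- (Gt_true h q cp eta u (y u) ltac:(lra) ltac:(lra)). apply Dy. lra. }
    assert (Hyb : forall t, x0 <= t <= b -> y t < - eh).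
    { intros t Ht. apply (hitting h q Hq cp y al 1 t D qm K); try lra.
      - unfold D; lra.
      - exact Htrue.
      - intros u Hu. apply Hmx. unfold D in *; lra.
      - intros u Hu. apply Hhb. unfold D in *; lra. }
    destruct (sol_props h q Hh Hq cp e x0 s He ltac:(lra)) as [S2 [_ D2]].
    intros t Ht.
    rewrite (uniq_lemma h q Hq cp e (sol h q cp e x0 s) y x0 b x0 He ltac:(lra) ltac:(lra) ltac:(lra) ltac:(lra)).
    - apply Rlt_le. apply Hyb; auto.
    - intros u Hu. assert (Hyu := Hyb u Hu). split. apply D2; lra.
      rewrite (Gt_true h q cp e u (y u) ltac:(lra) ltac:(unfold e; lra)).
      rewrite <- (Gt_true h q cp eta u (y u) ltac:(lra) ltac:(assert (Hyu2 := Hy u ltac:(lra)); lra)).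
      apply Dy; lra.
    - rewrite S, S2; reflexivity.
    - exact Ht. }
  destruct (dep_lemma h q Hq e He) as [Ke [HKe Hdep]].
  destruct (Happ (e / (Ke + 1))) as [s [Hgs [Hs1 Hs2]]].
  { apply Rdiv_lt_0_compat; lra. }
  exists e. split; auto. intros t Ht.
  destruct (sol_props h q Hh Hq cp e x0 s He ltac:(lra)) as [S1 [_ D1]].
  destruct (sol_props h q Hh Hq cp e x0 sh He ltac:(lra)) as [S2 [_ D2]].
  assert (H := Hdep cp cp (sol h q cp e x0 sh) (sol h q cp e x0 s) x0 b x0 ltac:(lra) ltac:(lra) ltac:(lra) ltac:(lra)
      (fun u Hu => conj (D2 u ltac:(lra)) (D1 u ltac:(lra))) t Ht).
  rewrite S1, S2, Rminus_diag in H.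
  assert (Hr : (Ke + 1) * (e / (Ke + 1)) = e) by (field; lra).
  assert (Hsd : (sh - s) ^ 2 <= (e / (Ke + 1)) ^ 2).
  { assert (0 <= sh - s) by lra. assert (0 < e / (Ke + 1)) by (apply Rdiv_lt_0_compat; lra). nra. }
  assert (Ke * ((sh - s) ^ 2 + 0 ^ 2) <= e ^ 2).
  { assert (0 < e / (Ke + 1)) by (apply Rdiv_lt_0_compat; lra).
    assert (Ke * (e / (Ke + 1)) <= e) by nra. assert (e / (Ke + 1) <= e) by nra. nra. }
  assert (Hsq := sq_le (sol h q cp e x0 sh t - sol h q cp e x0 s t) e ltac:(lra) ltac:(lra)).
  assert (HAs := HA s Hgs t Ht). unfold e in *. lra.
Qed.


Lemma ns_false : False.
Proof.
  destruct exists_cp as [cp [Hcp Hg0]].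
  destruct (sup_exists cp Hg0 ltac:(lra)) as [sh [Hsh [Hng Happ]]].
  assert (Hbh : forall a b, 0 < a -> a <= x0 -> x0 <= b -> b < 1 -> exists e, bnd h q cp e x0 sh a b).
  { intros a b Ha Hax Hxb Hb.
    destruct (trap_back cp sh a ltac:(lra) ltac:(lra) Ha Hax) as [ea [Ba _]].
    destruct (fwd_bound cp sh ltac:(lra) Happ b ltac:(lra)) as [eb Bb].
    exists (Rmin ea eb). apply combine_bnd; auto; lra. }
  destruct (build h q Hh Hq cp x0 sh ltac:(lra) Hbh) as [HZx HZ].
  set (Z := Zb h q cp x0 sh) in *.
  assert (HZc : forall t, 0 < t < 1 -> continuous Z t).
  { intros t Ht. apply (ex_derive_continuous Z). eexists; apply (HZ t Ht). }
  assert (Hnear0 : forall t, 0 < t <= x0 -> - k * t <= Z t <= zs t).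
  { intros t Ht. destruct (Rle_lt_or_eq_dec t x0 (proj2 Ht)) as [Htx|Htx].
    2:{ subst t. rewrite HZx. unfold s0 in Hsh. lra. }
    set (al := t / 2). set (be := (x0 + d1) / 2).
    split.
    - assert (Hpair : tsol_pair h q cp Z (fun u => - k * u) (fun u => Ft h q cp u (- k * u) + k) al be).
      { intros u Hu. assert (Hu01 : 0 < u < 1) by (unfold al, be in Hu; lra).
        destruct (HZ u Hu01) as [Z1 Z2]. split; auto. split. unfold al in Hu; nra. split; auto.
        replace (Ft h q cp u (- k * u) - (Ft h q cp u (- k * u) + k)) with (- k) by ring.
        auto_derive; auto. ring. }
      apply (cmp_bwd h q Hq cp Z (fun u => - k * u) (fun u => Ft h q cp u (- k * u) + k) al be t x0); try (unfold al, be; lra);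
        [exact Hpair | intros u Hu; apply Hup; lra | rewrite HZx; unfold s0 in Hsh; lra].
    - assert (Hpair : tsol_pair h q cs zs Z (fun _ => cp - cs) al be).
      { intros u Hu. assert (Hu01 : 0 < u < 1) by (unfold al, be in Hu; lra).
        destruct (HZ u Hu01) as [Z1 Z2]. destruct (Hzs u Hu01) as [Y1 Y2]. split; auto. split; auto. split; auto.
        rewrite <- Ft_shift. exact Z2. }
      apply (cmp_bwd h q Hq cs zs Z (fun _ => cp - cs) al be t x0); try (unfold al, be; lra);
        [exact Hpair | intros; lra]. }
  destruct (he_bound h Hh) as [Hm [HHm HHb]].
  set (K0 := Hm + Rabs cp). assert (HK0 : 0 <= K0) by (unfold K0; assert (H := Rabs_pos cp); lra).
  assert (HZd : forall t, 0 < t < 1 -> - K0 <= Ft h q cp t (Z t)).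
  { intros t Ht. destruct (HZ t Ht) as [Zn _]. unfold Ft.
    assert (H := HHb t). unfold he in H. rewrite clamp01_id in H by (unfold in01; lra).
    assert (H2 := Rle_abs cp). unfold Rabs in H; destruct Rcase_abs in H.
    all: assert (Hq0 : 0 <= q t) by (apply q_nonneg; auto; unfold in01; lra).
    all: assert (0 <= - (q t / Z t)) by (replace (- (q t / Z t)) with (q t / (- Z t)) by (field; lra);
           apply Rmult_le_pos; [lra| apply Rlt_le, Rinv_0_lt_compat; lra]).
    all: unfold K0; lra. }
  assert (Hnear1 : forall eps, 0 < eps -> exists d, 0 < d /\ forall t, 1 - d < t < 1 -> - eps < Z t).
  { intros eps Heps. apply NNPP. intro Hn.
    assert (Hfreq : forall d, 0 < d -> exists t, 1 - d < t < 1 /\ Z t <= - eps).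
    { intros d Hd. apply NNPP. intro Hn2. apply Hn. exists d. split; auto. intros t Ht.
      apply Rnot_le_lt. intro Hle. apply Hn2. exists t. auto. }
    apply Hng.
    set (u0 := Rmax (1 - eps / (2 * (K0 + 1))) ((x0 + 1) / 2)).
    assert (Hu0 : x0 < u0 < 1).
    { unfold u0. split. eapply Rlt_le_trans; [| apply Rmax_r]; lra.
      apply Rmax_lub_lt; [| lra]. assert (0 < eps / (2 * (K0 + 1))) by (apply Rdiv_lt_0_compat; lra). lra. }
    assert (Hu0b : 1 - eps / (2 * (K0 + 1)) <= u0) by apply Rmax_l.
    destruct (cont_max_neg Z x0 u0 ltac:(lra) (fun t Ht => HZc t ltac:(lra)) (fun t Ht => proj1 (HZ t ltac:(lra)))) as [bet [Hbet Hbt]].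
    apply (Good_of_true cp sh Z (Rmin bet (eps / 2)) ltac:(apply Rmin_glb_lt; lra) (fun t Ht => proj2 (HZ t Ht)) HZx).
    intros t Ht. destruct (Rle_or_lt t u0) as [Htu|Htu].
    - assert (H := Hbt t ltac:(lra)). assert (Rmin bet (eps/2) <= bet) by apply Rmin_l. lra.
    - destruct (Hfreq (1 - t) ltac:(lra)) as [t2 [Ht2 HZt2]].
      assert (Hmono := incr_of_deriv (fun v => Z v + K0 * v) (fun v => Ft h q cp v (Z v) + K0) t t2 ltac:(lra)).
      assert (Hm1 : Z t + K0 * t <= Z t2 + K0 * t2).
      { apply Hmono.
        - intros v Hv. apply (is_derive_plus Z (fun v => K0 * v)). apply HZ; lra.
          assert (H := is_derive_scal (fun u => u) v K0 1 (@is_derive_id R_AbsRing v)). rewrite Rmult_1_r in H. exact H.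
        - intros v Hv. assert (H := HZd v ltac:(lra)). lra. }
      assert (K0 * (t2 - t) <= eps / 2).
      { assert (t2 - t <= eps / (2 * (K0 + 1))) by lra.
        assert (K0 * (eps / (2 * (K0 + 1))) <= eps / 2).
        { unfold Rdiv. rewrite Rinv_mult, <- Rmult_assoc.
          assert (K0 * / (K0 + 1) <= 1).
          { apply Rmult_le_reg_r with (K0 + 1). lra. rewrite Rmult_assoc, Rinv_l by lra. lra. }
          assert (0 < / 2) by lra. assert (0 < / (K0 + 1)) by (apply Rinv_0_lt_compat; lra). nra. }
        assert (K0 * (t2 - t) <= K0 * (eps / (2 * (K0 + 1)))) by (apply Rmult_le_compat_l; lra). lra. }
      assert (Rmin bet (eps/2) <= eps / 2) by apply Rmin_r. lra. }
  apply (Hmin cp (ext01 Z)). lra.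
  apply (P00_of h q cp Z HZ).
  - intros eps Heps.
    destruct (cont01_ed zs 0 Hzc ltac:(unfold in01; lra) eps Heps) as [dz [Hdz Hzz]].
    exists (Rmin x0 (Rmin dz (eps / (k + 1)))). split.
    { apply Rmin_glb_lt. lra. apply Rmin_glb_lt. lra. apply Rdiv_lt_0_compat; lra. }
    intros t Ht. assert (Rmin x0 (Rmin dz (eps / (k + 1))) <= x0) by apply Rmin_l.
    assert (Rmin x0 (Rmin dz (eps / (k + 1))) <= dz) by (eapply Rle_trans; [apply Rmin_r| apply Rmin_l]).
    assert (Rmin x0 (Rmin dz (eps / (k + 1))) <= eps / (k + 1)) by (eapply Rle_trans; [apply Rmin_r| apply Rmin_r]).
    destruct (Hnear0 t ltac:(lra)) as [A1 A2].
    assert (Hzt := Hzz t ltac:(unfold in01; lra) ltac:(rewrite Rminus_0_r, Rabs_right; lra)).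
    rewrite Hz0, Rminus_0_r in Hzt. apply Rabs_def2 in Hzt.
    assert (k * t < eps).
    { assert (t < eps / (k + 1)) by lra. apply Rmult_lt_compat_l with (r := k + 1) in H2; [|lra].
      replace ((k + 1) * (eps / (k + 1))) with eps in H2 by (field; lra). nra. }
    apply Rabs_def1; lra.
  - intros eps Heps. destruct (Hnear1 eps Heps) as [d [Hd Hdd]].
    exists (Rmin d (1 - x0)). split. apply Rmin_glb_lt; lra.
    intros t Ht. assert (Rmin d (1 - x0) <= d) by apply Rmin_l. assert (Rmin d (1 - x0) <= 1 - x0) by apply Rmin_r.
    assert (H1 := Hdd t ltac:(lra)). destruct (HZ t ltac:(lra)) as [Zn _].
    apply Rabs_def1; lra.
Qed.

End NS.

Section IntB.
Variable q : R -> R.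
Hypothesis Hq : cond_q q.

Definition fq := fun s => q s / s ^ 2.

Lemma fq_cont t : 0 < t < 1 -> continuous fq t.
Proof.
  intros Ht. unfold fq.
  assert (Hm : continuous (fun s : R => s ^ 2) t) by (apply (ex_derive_continuous (fun s : R => s ^ 2)); auto_derive; auto).
  assert (Hi := continuous_Rinv_comp _ _ Hm ltac:(nra)).
  exact (continuous_mult q _ t (cont_int q t (proj1 Hq) Ht) Hi).
Qed.

Lemma fq_ex a b : 0 < a -> a <= b -> b < 1 -> ex_RInt fq a b.
Proof.
  intros. apply (@ex_RInt_continuous R_CompleteNormedModule). intros z Hz.
  rewrite Rmin_left in Hz by lra. rewrite Rmax_right in Hz by lra. apply fq_cont. lra.
Qed.

Lemma fq_nonneg t : 0 < t < 1 -> 0 <= fq t.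
Proof.
  intros Ht. unfold fq. apply Rmult_le_pos. apply q_nonneg; auto. unfold in01; lra.
  apply Rlt_le, Rinv_0_lt_compat. nra.
Qed.

Lemma int_bound : (exists delta L, 0 < delta < 1 /\ is_RInt_gen fq (at_right 0) (at_point delta) L) ->
  exists rho Bd, 0 < rho < 1 /\ 0 <= Bd /\ forall t u, 0 < t -> t <= u -> u <= rho -> RInt fq t u <= Bd.
Proof.
  intros [delta [L [Hd HI]]].
  assert (H := proj1 (filterlimi_locally _ L) HI (mkposreal 1 ltac:(lra))).
  destruct H as [Q R HQ HR HP]. simpl in HR.
  destruct HQ as [eps Heps].
  set (rho := Rmin (eps / 2) (delta / 2)).
  assert (Hr0 : 0 < rho) by (unfold rho; apply Rmin_glb_lt; [assert (0 < pos eps) by apply cond_pos; lra| lra]).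
  assert (Hr1 : rho <= eps / 2) by apply Rmin_l. assert (Hr2 : rho <= delta / 2) by apply Rmin_r.
  exists rho, (Rabs L + 1). split. lra. split. assert (H := Rabs_pos L); lra.
  intros t u Ht Htu Hu.
  destruct (HP t delta) as [z [Hz1 Hz2]].
  { apply Heps. apply ball_R. rewrite Rminus_0_r, Rabs_right by lra. assert (0 < pos eps) by apply cond_pos. lra. lra. }
  { exact HR. }
  simpl in Hz1, Hz2. apply ball_R in Hz2. apply Rabs_def2 in Hz2.
  assert (E := @RInt_Chasles R_CompleteNormedModule fq t u delta (fq_ex t u ltac:(lra) ltac:(lra) ltac:(lra)) (fq_ex u delta ltac:(lra) ltac:(lra) ltac:(lra))).
  change (plus ?a ?b) with (a + b) in E.
  rewrite (is_RInt_unique _ _ _ _ Hz1) in E.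
  assert (0 <= RInt fq u delta).
  { apply RInt_ge_0. lra. apply fq_ex; lra. intros x Hx. apply fq_nonneg. lra. }
  assert (L <= Rabs L) by apply Rle_abs. change (z - L < 1 /\ - (1) < z - L) in Hz2. lra.
Qed.

Lemma ln_int a b : 0 < a -> a <= b -> RInt (fun s => / s) a b = ln b - ln a.
Proof.
  intros Ha Hab. apply is_RInt_unique.
  apply (@is_RInt_derive R_CompleteNormedModule ln (fun s => / s) a b).
  - intros x Hx. rewrite Rmin_left in Hx by lra. rewrite Rmax_right in Hx by lra. apply is_derive_ln. lra.
  - intros x Hx. rewrite Rmin_left in Hx by lra. rewrite Rmax_right in Hx by lra. apply continuous_Rinv. lra.
Qed.

Lemma q_small : (exists delta L, 0 < delta < 1 /\ is_RInt_gen fq (at_right 0) (at_point delta) L) ->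
  (exists l, 0 <= l /\ filterlim (fun x => q x / x) (at_right 0) (locally l)) ->
  forall eps, 0 < eps -> exists rho, 0 < rho /\ forall t, 0 < t < rho -> q t / t < eps.
Proof.
  intros Hint [l [Hl Hlim]].
  destruct (int_bound Hint) as [rho [Bd [Hrho [HBd Hb]]]].
  assert (Hl0 : l = 0).
  { destruct Hl as [Hl|Hl]; [|auto]. exfalso.
    assert (H := proj1 (filterlim_locally _ _) Hlim (mkposreal (l / 2) ltac:(lra))).
    destruct H as [r1 Hr1].
    set (rp := Rmin rho (r1 / 2)).
    assert (Hrp : 0 < rp) by (unfold rp; apply Rmin_glb_lt; [lra| assert (0 < pos r1) by apply cond_pos; lra]).
    assert (Hrp1 : rp <= rho) by apply Rmin_l. assert (Hrp2 : rp <= r1 / 2) by apply Rmin_r.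
    set (t := rp * exp (- (2 * (Bd + 1) / l))).
    assert (Hexp : exp (- (2 * (Bd + 1) / l)) < 1).
    { rewrite <- exp_0 at 2. apply exp_increasing. assert (0 < 2 * (Bd + 1) / l) by (apply Rdiv_lt_0_compat; lra). lra. }
    assert (Ht0 : 0 < t) by (unfold t; apply Rmult_lt_0_compat; [lra| apply exp_pos]).
    assert (Ht1 : t < rp) by (unfold t; nra).
    assert (Hlow : forall s, t < s < rp -> l / 2 * / s <= fq s).
    { intros s Hs. assert (H := Hr1 s). unfold fq.
      assert (Hb1 : Rabs (q s / s - l) < l / 2).
      { apply ball_R. apply H. apply ball_R. rewrite Rminus_0_r, Rabs_right by lra. assert (0 < pos r1) by apply cond_pos. lra. lra. }
      apply Rabs_def2 in Hb1.
      replace (q s / s ^ 2) with ((q s / s) * / s) by (field; lra).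
      apply Rmult_le_compat_r. apply Rlt_le, Rinv_0_lt_compat; lra. lra. }
    assert (Hle : RInt (fun s => l / 2 * / s) t rp <= RInt fq t rp).
    { apply RInt_le. lra.
      - apply (@ex_RInt_continuous R_CompleteNormedModule). intros z Hz.
        rewrite Rmin_left in Hz by lra. rewrite Rmax_right in Hz by lra.
        apply (continuous_mult (fun _ => l / 2) (fun s => / s)). apply continuous_const. apply continuous_Rinv. lra.
      - apply fq_ex; lra.
      - exact Hlow. }
    assert (E : RInt (fun s => l / 2 * / s) t rp = l / 2 * (ln rp - ln t)).
    { rewrite <- ln_int by lra.
      apply (@RInt_scal R_CompleteNormedModule (fun s => / s) t rp (l / 2)).
      apply (@ex_RInt_continuous R_CompleteNormedModule). intros z Hz.
      rewrite Rmin_left in Hz by lra. rewrite Rmax_right in Hz by lra. apply continuous_Rinv. lra. }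
    assert (Eln : ln rp - ln t = 2 * (Bd + 1) / l).
    { unfold t. rewrite ln_mult, ln_exp by (try apply exp_pos; lra). ring. }
    rewrite E, Eln in Hle.
    assert (l / 2 * (2 * (Bd + 1) / l) = Bd + 1) by (field; lra).
    assert (Hb2 := Hb t rp Ht0 ltac:(lra) Hrp1). lra. }
  subst l. intros eps Heps.
  assert (H := proj1 (filterlim_locally _ _) Hlim (mkposreal eps Heps)).
  destruct H as [r1 Hr1]. exists r1. split. apply cond_pos.
  intros t Ht. assert (H := Hr1 t).
  assert (Hb1 : Rabs (q t / t - 0) < eps).
  { apply ball_R. apply H. apply ball_R. rewrite Rminus_0_r, Rabs_right by lra. lra. lra. }
  rewrite Rminus_0_r in Hb1. apply Rabs_def2 in Hb1. lra.
Qed.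

End IntB.

Section Strong.
Variables (h q zs w : R -> R) (cs k d0 rho Bd : R).
Hypothesis Hh : cont01 h.
Hypothesis Hq : cond_q q.
Hypothesis Hzs : forall t, 0 < t < 1 -> zs t < 0 /\ is_derive zs t (Ft h q cs t (zs t)).
Hypothesis Hzc : cont01 zs.
Hypothesis Hz0 : zs 0 = 0.
Hypothesis Hz1 : zs 1 = 0.
Hypothesis Hws : forall t, 0 < t < 1 -> w t < 0 /\ is_derive w t (Ft h q cs t (w t)).
Hypothesis Hwc : cont01 w.
Hypothesis Hw0 : w 0 = 0.
Hypothesis Hk : 0 < k.
Hypothesis Hd0 : 0 < d0.
Hypothesis Hstrong : forall s, 0 < s < d0 -> zs s <= - k * s.
Hypothesis Hrho : 0 < rho < 1.
Hypothesis Hbd : forall t u, 0 < t -> t <= u -> u <= rho -> RInt (fq q) t u <= Bd.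

Definition gg := fun u => q u / (zs u * w u).

Lemma rel a b : 0 < a -> a <= b -> b < 1 -> zs b - w b = (zs a - w a) * exp (RInt gg a b).
Proof.
  intros Ha Hab Hb.
  assert (Hpair : tsol_pair h q cs zs w (fun _ => 0) (a / 2) ((b + 1) / 2)).
  { intros u Hu. destruct (Hzs u ltac:(lra)) as [Z1 Z2]. destruct (Hws u ltac:(lra)) as [W1 W2].
    split; auto. split; auto. split; auto. rewrite Rminus_0_r; auto. }
  apply (cmp_eq h q Hq cs zs w (a/2) ((b+1)/2) a b ltac:(lra) ltac:(lra) Hab ltac:(lra) ltac:(lra) Hpair b ltac:(lra)).
Qed.

Lemma gg_ex a b : 0 < a -> a <= b -> b < 1 -> ex_RInt gg a b.
Proof.
  intros Ha Hab Hb.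
  assert (Hpair : tsol_pair h q cs zs w (fun _ => 0) (a / 2) ((b + 1) / 2)).
  { intros u Hu. destruct (Hzs u ltac:(lra)) as [Z1 Z2]. destruct (Hws u ltac:(lra)) as [W1 W2].
    split; auto. split; auto. split; auto. rewrite Rminus_0_r; auto. }
  apply (@ex_RInt_continuous R_CompleteNormedModule). intros z Hz.
  rewrite Rmin_left in Hz by lra. rewrite Rmax_right in Hz by lra.
  exact (proj1 (pair_hyp h q Hq cs zs w _ (a/2) ((b+1)/2) ltac:(lra) ltac:(lra) Hpair z ltac:(lra))).
Qed.

Lemma gg_nonneg u : 0 < u < 1 -> 0 <= gg u.
Proof.
  intros Hu. unfold gg. destruct (Hzs u Hu) as [Z1 _]. destruct (Hws u Hu) as [W1 _].
  apply Rmult_le_pos. apply q_nonneg; auto. unfold in01; lra. apply Rlt_le, Rinv_0_lt_compat. nra.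
Qed.

Lemma strong_uniq x1 : 0 < x1 < 1 -> w x1 = zs x1.
Proof.
  intros Hx1. destruct (Rtotal_order (w x1) (zs x1)) as [Hlt|[Heq|Hgt]]; auto; exfalso.
  -
    set (t1 := Rmin x1 (Rmin (d0 / 2) rho)).
    assert (Ht1a : t1 <= x1) by apply Rmin_l.
    assert (Ht1b : t1 <= d0 / 2) by (eapply Rle_trans; [apply Rmin_r| apply Rmin_l]).
    assert (Ht1c : t1 <= rho) by (eapply Rle_trans; [apply Rmin_r| apply Rmin_r]).
    assert (Ht1p : 0 < t1) by (unfold t1; apply Rmin_glb_lt; [lra| apply Rmin_glb_lt; lra]).
    assert (Hpos : forall t, 0 < t <= x1 -> 0 < zs t - w t).
    { intros t Ht. assert (E := rel t x1 ltac:(lra) ltac:(lra) ltac:(lra)).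
      apply Rnot_le_lt. intro Hn. assert (H := exp_pos (RInt gg t x1)).
      assert ((zs t - w t) * exp (RInt gg t x1) <= 0). { apply Rmult_le_0_r; lra. }
      lra. }
    set (m0 := (zs t1 - w t1) * exp (- (Bd / k ^ 2))).
    assert (Hm0 : 0 < m0) by (unfold m0; apply Rmult_lt_0_compat; [apply Hpos; lra| apply exp_pos]).
    assert (Hlow : forall t, 0 < t <= t1 -> m0 <= zs t - w t).
    { intros t Ht.
      assert (E := rel t t1 ltac:(lra) ltac:(lra) ltac:(lra)).
      assert (Hi : RInt gg t t1 <= Bd / k ^ 2).
      { apply Rle_trans with (RInt (fun s => / k ^ 2 * fq q s) t t1).
        - apply RInt_le. lra. apply gg_ex; lra.
          apply (@ex_RInt_scal R_NormedModule (fq q) t t1 (/ k ^ 2)). apply fq_ex; auto; lra.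
          intros s Hs. unfold gg, fq.
          assert (Hzk := Hstrong s ltac:(lra)). assert (Hd := Hpos s ltac:(lra)).
          assert (Hq0 : 0 <= q s) by (apply q_nonneg; auto; unfold in01; lra).
          assert (Hprod : k ^ 2 * s ^ 2 <= zs s * w s).
          { assert (Hc := Rmult_le_compat (k * s) (- zs s) (k * s) (- w s) ltac:(nra) ltac:(nra) ltac:(lra) ltac:(lra)).
            replace (k ^ 2 * s ^ 2) with (k * s * (k * s)) by ring. replace (zs s * w s) with (- zs s * - w s) by ring. exact Hc. }
          assert (0 < k ^ 2 * s ^ 2) by (apply Rmult_lt_0_compat; nra).
          replace (/ k ^ 2 * (q s / s ^ 2)) with (q s / (k ^ 2 * s ^ 2)) by (field; lra).
          unfold Rdiv. apply Rmult_le_compat_l; auto. apply Rinv_le_contravar; lra.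
        - assert (Es : RInt (fun s => / k ^ 2 * fq q s) t t1 = / k ^ 2 * RInt (fq q) t t1)
            by (apply (@RInt_scal R_CompleteNormedModule (fq q) t t1 (/ k ^ 2)); apply fq_ex; auto; lra).
          rewrite Es.
          assert (Hb := Hbd t t1 ltac:(lra) ltac:(lra) Ht1c).
          unfold Rdiv. rewrite Rmult_comm. apply Rmult_le_compat_r. apply Rlt_le, Rinv_0_lt_compat; nra. exact Hb. }
      assert (Hdt : zs t - w t = (zs t1 - w t1) * exp (- RInt gg t t1)).
      { rewrite E. rewrite Rmult_assoc, <- exp_plus. replace (RInt gg t t1 + - RInt gg t t1) with 0 by ring.
        rewrite exp_0; ring. }
      rewrite Hdt. unfold m0. apply Rmult_le_compat_l. assert (H := Hpos t1 ltac:(lra)); lra.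
      destruct (Req_dec (- (Bd / k ^ 2)) (- RInt gg t t1)) as [Ee|Ee]. rewrite Ee; lra.
      left. apply exp_increasing. lra. }
    destruct (cont01_ed zs 0 Hzc ltac:(unfold in01; lra) (m0 / 2) ltac:(lra)) as [da [Hda Hza]].
    destruct (cont01_ed w 0 Hwc ltac:(unfold in01; lra) (m0 / 2) ltac:(lra)) as [db [Hdb Hwb]].
    set (t := Rmin t1 (Rmin da db) / 2).
    assert (Hmin1 : Rmin t1 (Rmin da db) <= t1) by apply Rmin_l.
    assert (Hmin2 : Rmin t1 (Rmin da db) <= da) by (eapply Rle_trans; [apply Rmin_r| apply Rmin_l]).
    assert (Hmin3 : Rmin t1 (Rmin da db) <= db) by (eapply Rle_trans; [apply Rmin_r| apply Rmin_r]).
    assert (Hmin0 : 0 < Rmin t1 (Rmin da db)) by (apply Rmin_glb_lt; [lra| apply Rmin_glb_lt; lra]).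
    assert (H1 := Hza t ltac:(unfold in01, t; lra) ltac:(unfold t; rewrite Rminus_0_r, Rabs_right; lra)).
    assert (H2 := Hwb t ltac:(unfold in01, t; lra) ltac:(unfold t; rewrite Rminus_0_r, Rabs_right; lra)).
    rewrite Hz0, Rminus_0_r in H1. rewrite Hw0, Rminus_0_r in H2.
    apply Rabs_def2 in H1. apply Rabs_def2 in H2.
    assert (H3 := Hlow t ltac:(unfold t; lra)). lra.
  -
    set (m := w x1 - zs x1). assert (Hm : 0 < m) by (unfold m; lra).
    assert (Habove : forall t, x1 <= t < 1 -> zs t + m <= w t).
    { intros t Ht. assert (E := rel x1 t ltac:(lra) ltac:(lra) ltac:(lra)).
      assert (Hi : 0 <= RInt gg x1 t) by (apply RInt_ge_0; [lra| apply gg_ex; lra| intros; apply gg_nonneg; lra]).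
      assert (He := exp_ge1 _ Hi).
      replace (zs x1 - w x1) with (- m) in E by (unfold m; ring).
      assert (- m * exp (RInt gg x1 t) <= - m) by nra. lra. }
    destruct (cont01_ed zs 1 Hzc ltac:(unfold in01; lra) (m / 2) ltac:(lra)) as [da [Hda Hza]].
    set (t := Rmax x1 (1 - da / 2)).
    assert (Ht : x1 <= t < 1) by (unfold t; split; [apply Rmax_l| apply Rmax_lub_lt; lra]).
    assert (Ht2 : 1 - da / 2 <= t) by (unfold t; apply Rmax_r).
    assert (H1 := Hza t ltac:(unfold in01; lra) ltac:(rewrite Rabs_left; lra)).
    rewrite Hz1 in H1. rewrite Rminus_0_r in H1. apply Rabs_def2 in H1.
    assert (H2 := Habove t Ht). destruct (Hws t ltac:(lra)) as [W1 _]. lra.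
Qed.

End Strong.

Theorem proposition6p2 (f h q : R -> R) (cstar : R)
  (Hf : C1_01_with_deriv f h) (Hf0 : f 0 = 0)
  (Hq : cond_q q)
  (Hlim : exists l, 0 <= l /\
            filterlim (fun x => q x / x) (at_right 0) (locally l))
  (Hint : exists delta L, 0 < delta < 1 /\
            is_RInt_gen (fun s => q s / s ^ 2) (at_right 0) (at_point delta) L)
  (Hcstar : forall c, (exists z, sol_P00 h q c z) <-> cstar <= c)
  (Hgt : cstar > h 0) :
  exists z, sol_P h q cstar z /\ z 1 = 0 /\
    (forall w, sol_P h q cstar w -> forall x, in01 x -> w x = z x).
Proof.
  destruct Hf as [_ [Hh _]].
  destruct (proj2 (Hcstar cstar) (Rle_refl _)) as [zs Hzs00].
  destruct Hzs00 as [HzP Hz1]. destruct HzP as [Hzc [Hzd [Hzn Hz0]]].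
  assert (Hzs : forall t, 0 < t < 1 -> zs t < 0 /\ is_derive zs t (Ft h q cstar t (zs t))).
  { intros t Ht. split. apply Hzn; exact Ht. apply Hzd; exact Ht. }
  assert (Hmin : forall c z, c < cstar -> sol_P00 h q c z -> False).
  { intros c z Hc Hz. assert (H := proj1 (Hcstar c) (ex_intro _ z Hz)). lra. }
  set (a0 := cstar - h 0). assert (Ha0 : 0 < a0) by (unfold a0; lra).
  set (k := a0 / 4). assert (Hk : 0 < k) by (unfold k; lra).
  set (e1 := a0 / 4). assert (He1 : 0 < e1) by (unfold e1; lra).
  destruct (q_small q Hq Hint Hlim (k * a0 / 8) ltac:(unfold k; nra)) as [rq [Hrq Hqs]].
  destruct (cont01_ed h 0 Hh ltac:(unfold in01; lra) (a0 / 4) ltac:(lra)) as [dh [Hdh Hhd]].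
  set (d1 := Rmin (1/2) (Rmin rq dh)).
  assert (Hd1a : d1 <= 1/2) by apply Rmin_l.
  assert (Hd1b : d1 <= rq) by (eapply Rle_trans; [apply Rmin_r| apply Rmin_l]).
  assert (Hd1c : d1 <= dh) by (eapply Rle_trans; [apply Rmin_r| apply Rmin_r]).
  assert (Hd1 : 0 < d1 < 1) by (split; [unfold d1; apply Rmin_glb_lt; [lra| apply Rmin_glb_lt; lra]| lra]).
  assert (Hup : forall c t, cstar - e1 <= c <= cstar -> 0 < t < d1 -> Ft h q c t (- k * t) + k <= 0).
  { intros c t Hc Ht. unfold Ft.
    assert (E : q t / (- k * t) = - ((q t / t) / k)) by (field; lra). rewrite E.
    assert (H1 := Hqs t ltac:(lra)).
    assert (H2 := Hhd t ltac:(unfold in01; lra) ltac:(rewrite Rminus_0_r, Rabs_right; lra)).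
    apply Rabs_def2 in H2.
    assert (H3 : (q t / t) / k < a0 / 8).
    { apply Rmult_lt_reg_r with k; auto. unfold Rdiv at 1. rewrite Rmult_assoc, Rinv_l, Rmult_1_r by lra.
      assert (Hc8 : a0 / 8 * k = k * a0 / 8) by (unfold Rdiv; ring). rewrite Hc8. exact H1. }
    assert (Ek : k = a0 / 4) by reflexivity. assert (Ee : e1 = a0 / 4) by reflexivity. assert (Ea : a0 = cstar - h 0) by reflexivity.
    clearbody k e1 a0. lra. }
  assert (Hstr : exists d0, 0 < d0 /\ forall s, 0 < s < d0 -> zs s <= - k * s).
  { apply NNPP. intro Hn.
    assert (Hx : exists x0, 0 < x0 < d1 /\ - k * x0 < zs x0).
    { apply NNPP. intro Hn2. apply Hn. exists d1. split. lra. intros s Hs.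
      apply Rnot_lt_le. intro Hl. apply Hn2. exists s. auto. }
    destruct Hx as [x0 [Hx0 Hzx]].
    exact (ns_false h q zs cstar k d1 e1 x0 Hh Hq Hzs Hzc Hz0 Hz1 Hk Hd1 He1 Hup Hmin Hx0 Hzx). }
  destruct Hstr as [d0 [Hd0 Hstrong]].
  destruct (int_bound q Hq Hint) as [rho [Bd [Hrho [HBd Hbd]]]].
  exists zs. split. split; auto. split; auto.
  intros w Hw x Hx. destruct Hw as [Hwc [Hwd [Hwn Hw0]]].
  assert (Hws : forall t, 0 < t < 1 -> w t < 0 /\ is_derive w t (Ft h q cstar t (w t))).
  { intros t Ht. split. apply Hwn; exact Ht. apply Hwd; exact Ht. }
  assert (Hin : forall t, 0 < t < 1 -> w t = zs t).
  { intros t Ht. apply (strong_uniq h q zs w cstar k d0 rho Bd Hq Hzs Hzc Hz0 Hz1 Hws Hwc Hw0 Hk Hd0 Hstrong Hrho Hbd t Ht). }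
  destruct Hx as [[Hx0|Hx0] [Hx1|Hx1]].
  - apply Hin; lra.
  - subst x. apply NNPP. intro Hne.
    set (e := Rabs (w 1 - zs 1) / 4).
    assert (He : 0 < e) by (unfold e; assert (0 < Rabs (w 1 - zs 1)) by (apply Rabs_pos_lt; lra); lra).
    destruct (cont01_ed w 1 Hwc ltac:(unfold in01; lra) e He) as [dw [Hdw Hwd1]].
    destruct (cont01_ed zs 1 Hzc ltac:(unfold in01; lra) e He) as [dz [Hdz Hzd1]].
    set (t := 1 - Rmin (1/2) (Rmin dw dz) / 2).
    assert (Hm1 : Rmin (1/2) (Rmin dw dz) <= 1/2) by apply Rmin_l.
    assert (Hm2 : Rmin (1/2) (Rmin dw dz) <= dw) by (eapply Rle_trans; [apply Rmin_r| apply Rmin_l]).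
    assert (Hm3 : Rmin (1/2) (Rmin dw dz) <= dz) by (eapply Rle_trans; [apply Rmin_r| apply Rmin_r]).
    assert (Hm0 : 0 < Rmin (1/2) (Rmin dw dz)) by (apply Rmin_glb_lt; [lra| apply Rmin_glb_lt; lra]).
    assert (A1 := Hwd1 t ltac:(unfold in01, t; lra) ltac:(unfold t; rewrite Rabs_left; lra)).
    assert (A2 := Hzd1 t ltac:(unfold in01, t; lra) ltac:(unfold t; rewrite Rabs_left; lra)).
    rewrite (Hin t ltac:(unfold t; lra)) in A1.
    assert (Rabs (w 1 - zs 1) <= Rabs (zs t - w 1) + Rabs (zs t - zs 1)).
    { replace (w 1 - zs 1) with (- (zs t - w 1) + (zs t - zs 1)) by ring.
      apply Rle_trans with (1 := Rabs_triang _ _). rewrite Rabs_Ropp. lra. }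
    unfold e in *. lra.
  - subst x. rewrite Hw0, Hz0. reflexivity.
  - lra.
Qed.
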